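(* Let $\theta$ be an infinite cardinal. (1) The logic $\mathbb L^1_{\le\theta}$ has dullness-elimination. (2) If $\tau$ is the empty vocabulary and $M_1,M_2$ are $\tau$-models (i.e. sets) of cardinality $>\theta$, then $M_1\,\mathscr E^1_{\mathrm{qf}(\tau),\theta,\alpha}\,M_2$ for every $\alpha<\theta^+$. (3) The conclusion of (2) also holds if $\mathrm{cf}(\theta)=\aleph_0$ and $\|M_1\|,\|M_2\|\ge\theta$.
   Context: A logic $\mathscr L$ has dullness-elimination if: whenever $\tau_1$ is a relational vocabulary (predicates only), $\tau_2=\tau_1\cup\{P\}$ with $P$ a new unary predicate, $\psi_2\in\mathscr L(\tau_2)$, and every model $M$ of $\psi_2$ has $P^M\ne\emptyset$ and $Q^M\subseteq(P^M)^{\mathrm{arity}(Q)}$ for all $Q\in\tau_1$, then there is $\psi_1\in\mathscr L(\tau_1)$ whose models are exactly the structures (up to isomorphism) $(M\restriction\tau_1)\restriction P^M$ (the substructure with universe $P^M$) for $M$ a model of $\psi_2$. The game $\Game_{\Gamma,\theta,\alpha}[M_1,M_2]$: states are tuples $(A^1,A^2,h^1,h^2,g,\beta,n)$ with $A^\ell\subseteq M_\ell$, $|A^\ell|\le\theta$, $\beta\le\alpha$, $n<\omega$, $h^\ell:A^\ell\to\omega$, $g$ a partial injection $M_1\to M_2$ with $g^1=g,g^2=g^{-1}$, $\mathrm{Dom}(g^\ell)\subseteq A^\ell$, $g$ preserving every formula of $\Gamma$, and $h^\ell(a)<n$ on $\mathrm{Dom}(g^\ell)$. Start: $(\emptyset,\emptyset,\emptyset,\emptyset,\emptyset,\alpha,0)$.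 At state $\mathbf s_n$, AIS picks $\iota\in\{1,2\}$, $\beta_{n+1}<\beta_n$, $A'$ with $A^\iota_n\subseteq A'\subseteq M_\iota$, $|A'|\le\theta$; ISO picks a state $\mathbf s_{n+1}$ with index $n+1$ and ordinal $\beta_{n+1}$ extending $\mathbf s_n$ coordinatewise, with $A^\iota_{n+1}=A'$, $A^{3-\iota}_{n+1}=A^{3-\iota}_n\cup\mathrm{Dom}(g^{3-\iota}_{n+1})$, $h^\iota_{n+1}(a)\ge n+1$ for new $a\in A'$, and $\mathrm{Dom}(g^\iota_{n+1})=\{a\in A^\iota_n:h^\iota_n(a)<n+1\}$. A player without legal move loses; for $\alpha=0$ ISO wins iff the start is a state. $\mathscr E^0$: ISO has a winning strategy; $\mathscr E^1$: generated equivalence relation; $\mathrm{qf}(\tau)$: atomic formulas (for empty $\tau$ only equalities) and negations. $\mathbb L^1_{\le\theta}$: a sentence of $\mathbb L^1_{\le\theta}(\tau)$ is given by $\tau_1\subseteq\tau$, $|\tau_1|\le\theta$, $\alpha<\theta^+$ and at most $\beth_{\alpha+1}(\theta)$ $\tau_1$-models $M_i$; $M\models\psi$ iff $M\restriction\tau_1\,\mathscr E^1_{\mathrm{qf}(\tau_1),\theta,\alpha}\,M_i$ for some $i$. *)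

(* Defs.v *)
(* Set-theoretic notions (cardinals, ordinals, beth numbers) are
   encoded via types: a cardinal theta is represented by a type Theta,
   "|X| <= theta" by an injection X -> Theta, an ordinal alpha < theta^+ by a
   strict well-order on a type injecting into Theta. *)
From Stdlib Require Import Relations Classical.
From Stdlib Require Vectors.Fin.

Definition inj {X Y : Type} (f : X -> Y) : Prop := forall x y, f x = f y -> x = y.

Definition card_le (X Y : Type) : Prop := exists f : X -> Y, inj f.

Definition small (Theta : Type) {X : Type} (P : X -> Prop) : Prop :=
  card_le {x : X | P x} Theta.

Definition infinite_card (Theta : Type) : Prop := card_le nat Theta.

(* cf(theta) = aleph_0 : theta is a countable union of sets of size < theta *)
Definition cof_omega (Theta : Type) : Prop :=
  exists S : nat -> Theta -> Prop,
    (forall t, exists k, S k t) /\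
    (forall k, card_le {t : Theta | S k t} Theta /\ ~ card_le Theta {t : Theta | S k t}).

Record wellorder (A : Type) (R : A -> A -> Prop) : Prop := {
  wo_wf : well_founded R;
  wo_trans : forall x y z, R x y -> R y z -> R x z;
  wo_total : forall x y, R x y \/ x = y \/ R y x }.

Record ordinal_lt_succ (Theta : Type) := {
  oA : Type;
  oR : oA -> oA -> Prop;
  o_wo : wellorder oA oR;
  o_small : card_le oA Theta }.
Arguments oA {Theta}.
Arguments oR {Theta}.
Arguments o_wo {Theta}.

(* ordinals <= alpha : [Some a] is the order type of the predecessors of a,
   [None] is alpha itself *)
Definition ord_le_lt {A : Type} (R : A -> A -> Prop) (b c : option A) : Prop :=
  match b, c with
  | Some x, Some y => R x y
  | Some _, None => True
  | None, _ => False
  end.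

(* beth_fam a is a type of cardinality beth_{otp(a)}(theta):
   B(a) = Theta + Sum_{b < a} P(B(b)) *)
Definition beth_fam (Theta : Type) {A : Type} {R : A -> A -> Prop}
  (wf : well_founded R) : A -> Type :=
  Fix wf (fun _ => Type)
    (fun a rec => (Theta + {b : A & {h : R b a & (rec b h -> Prop)}})%type).

(* a type of cardinality beth_alpha(theta) *)
Definition beth_top (Theta : Type) {A : Type} {R : A -> A -> Prop}
  (wf : well_founded R) : Type :=
  (Theta + {a : A & (beth_fam Theta wf a -> Prop)})%type.

(* a type of cardinality beth_{alpha+1}(theta) *)
Definition beth_succ (Theta : Type) {A : Type} {R : A -> A -> Prop}
  (wf : well_founded R) : Type :=
  beth_top Theta wf -> Prop.

(* a vocabulary is a type of predicate symbols V with arities ar *)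
Record structure (V : Type) (ar : V -> nat) := {
  carrier : Type;
  rel : forall s : V, (Fin.t (ar s) -> carrier) -> Prop }.
Arguments carrier {V ar}.
Arguments rel {V ar}.

Definition reduct {V : Type} {ar : V -> nat} (S : V -> Prop) (M : structure V ar)
  : structure {s : V | S s} (fun s => ar (proj1_sig s)) :=
  {| carrier := carrier M; rel := fun s t => rel M (proj1_sig s) t |}.

Definition isomorphic {V : Type} {ar : V -> nat} (M N : structure V ar) : Prop :=
  exists (f : carrier M -> carrier N) (g : carrier N -> carrier M),
    (forall x, g (f x) = x) /\ (forall y, f (g y) = y) /\
    (forall s (t : Fin.t (ar s) -> carrier M), rel M s t <-> rel N s (fun i => f (t i))).

Section Game.
Context (Theta : Type) {A : Type} (R : A -> A -> Prop)
        {V : Type} {ar : V -> nat} (M1 M2 : structure V ar).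

Record gstate := {
  gA1 : carrier M1 -> Prop;
  gA2 : carrier M2 -> Prop;
  gh1 : carrier M1 -> nat;
  gh2 : carrier M2 -> nat;
  gg  : carrier M1 -> carrier M2 -> Prop;  (* graph of the partial injection g *)
  gb  : option A;                          (* ordinal beta <= alpha *)
  gn  : nat }.

(* g preserves every formula of qf(tau): atomic formulas and their negations
   (equalities are preserved since g is injective) *)
Definition preserves_qf (g : carrier M1 -> carrier M2 -> Prop) : Prop :=
  forall s (a : Fin.t (ar s) -> carrier M1) (b : Fin.t (ar s) -> carrier M2),
    (forall i, g (a i) (b i)) -> (rel M1 s a <-> rel M2 s b).

Definition is_state (s : gstate) : Prop :=
  small Theta (gA1 s) /\ small Theta (gA2 s) /\
  (forall x y y', gg s x y -> gg s x y' -> y = y') /\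
  (forall x x' y, gg s x y -> gg s x' y -> x = x') /\
  (forall x y, gg s x y -> gA1 s x /\ gA2 s y) /\
  preserves_qf (gg s) /\
  (forall x y, gg s x y -> gh1 s x < gn s /\ gh2 s y < gn s).

Definition start : gstate :=
  {| gA1 := fun _ => False; gA2 := fun _ => False; gh1 := fun _ => 0;
     gh2 := fun _ => 0; gg := fun _ _ => False; gb := None; gn := 0 |}.

(* AIS's move: iota (true = 1, false = 2), beta' < beta_n, A' *)
Definition ais_legal1 (s : gstate) (b' : option A) (A' : carrier M1 -> Prop) : Prop :=
  ord_le_lt R b' (gb s) /\ (forall x, gA1 s x -> A' x) /\ small Theta A'.
Definition ais_legal2 (s : gstate) (b' : option A) (A' : carrier M2 -> Prop) : Prop :=
  ord_le_lt R b' (gb s) /\ (forall x, gA2 s x -> A' x) /\ small Theta A'.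

Definition extends (s s' : gstate) (b' : option A) : Prop :=
  gn s' = S (gn s) /\ gb s' = b' /\
  (forall x, gA1 s x -> gA1 s' x) /\ (forall y, gA2 s y -> gA2 s' y) /\
  (forall x, gA1 s x -> gh1 s' x = gh1 s x) /\
  (forall y, gA2 s y -> gh2 s' y = gh2 s y) /\
  (forall x y, gg s x y -> gg s' x y) /\
  is_state s'.

Definition iso_resp1 (s : gstate) (b' : option A) (A' : carrier M1 -> Prop) (s' : gstate) : Prop :=
  extends s s' b' /\
  (forall x, gA1 s' x <-> A' x) /\
  (forall y, gA2 s' y <-> (gA2 s y \/ exists x, gg s' x y)) /\
  (forall x, A' x -> ~ gA1 s x -> S (gn s) <= gh1 s' x) /\
  (forall x, (exists y, gg s' x y) <-> (gA1 s x /\ gh1 s x < S (gn s))).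

Definition iso_resp2 (s : gstate) (b' : option A) (A' : carrier M2 -> Prop) (s' : gstate) : Prop :=
  extends s s' b' /\
  (forall y, gA2 s' y <-> A' y) /\
  (forall x, gA1 s' x <-> (gA1 s x \/ exists y, gg s' x y)) /\
  (forall y, A' y -> ~ gA2 s y -> S (gn s) <= gh2 s' y) /\
  (forall y, (exists x, gg s' x y) <-> (gA2 s y /\ gh2 s y < S (gn s))).

(* ISO wins from state s: every legal AIS move has a legal answer from which
   ISO wins (the game is finite since the ordinals decrease; a player without
   legal move loses). *)
Inductive iso_wins : gstate -> Prop :=
| iso_wins_intro : forall s,
    (forall b' A', ais_legal1 s b' A' -> exists s', iso_resp1 s b' A' s' /\ iso_wins s') ->
    (forall b' A', ais_legal2 s b' A' -> exists s', iso_resp2 s b' A' s' /\ iso_wins s') ->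
    iso_wins s.

Definition E0 : Prop := is_state start /\ iso_wins start.
End Game.

Definition E1 (Theta : Type) {A : Type} (R : A -> A -> Prop) {V : Type} {ar : V -> nat}
  : structure V ar -> structure V ar -> Prop :=
  clos_refl_sym_trans (structure V ar) (fun M1 M2 => E0 Theta R M1 M2).

Record sentence (Theta : Type) (V : Type) (ar : V -> nat) := {
  s_sub : V -> Prop;
  s_sub_small : small Theta s_sub;
  s_ord : ordinal_lt_succ Theta;
  s_idx : Type;
  s_idx_small : card_le s_idx (beth_succ Theta (wo_wf _ _ (o_wo s_ord)));
                                                       (* at most beth_{alpha+1}(theta) models *)
  s_models : s_idx -> structure {s : V | s_sub s} (fun s => ar (proj1_sig s)) }.
Arguments s_sub {Theta V ar}.
Arguments s_ord {Theta V ar}.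
Arguments s_idx {Theta V ar}.
Arguments s_models {Theta V ar}.

Definition sat {Theta V : Type} {ar : V -> nat} (M : structure V ar)
  (psi : sentence Theta V ar) : Prop :=
  exists i : s_idx psi,
    E1 Theta (oR (s_ord psi)) (reduct (s_sub psi) M) (s_models psi i).

(* tau_2 = tau_1 + {P}, P = None of arity 1 *)
Definition ext_ar {V : Type} (ar : V -> nat) (o : option V) : nat :=
  match o with Some q => ar q | None => 1 end.

Definition predP {V : Type} {ar : V -> nat} (M : structure (option V) (ext_ar ar))
  (x : carrier M) : Prop :=
  rel M None (fun _ => x).

Definition relativize {V : Type} {ar : V -> nat} (M : structure (option V) (ext_ar ar))
  : structure V ar :=
  {| carrier := {x : carrier M | predP M x};
     rel := fun q t => rel M (Some q) (fun i => proj1_sig (t i)) |}.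

Definition dullness_elimination (Theta : Type) : Prop :=
  forall (V1 : Type) (ar1 : V1 -> nat) (psi2 : sentence Theta (option V1) (ext_ar ar1)),
    (forall M, sat M psi2 ->
       (exists x, predP M x) /\
       (forall q (t : Fin.t (ar1 q) -> carrier M), rel M (Some q) t -> forall i, predP M (t i))) ->
    exists psi1 : sentence Theta V1 ar1,
      forall N : structure V1 ar1,
        sat N psi1 <-> exists M, sat M psi2 /\ isomorphic N (relativize M).

Definition empty_ar (e : Empty_set) : nat := match e with end.

(* Main.v *)
Require Import Defs.
From Stdlib Require Import Classical ClassicalEpsilon FunctionalExtensionality PropExtensionality ProofIrrelevance Lia Arith Relations.
From Stdlib Require Cantor.


Definition psub {T : Type} (X Y : T -> Prop) := forall t, X t -> Y t.
Definition pchain {T : Type} (C : (T->Prop)->Prop) :=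
  forall X Y, C X -> C Y -> psub X Y \/ psub Y X.
Definition bigU {T : Type} (C : (T->Prop)->Prop) : T -> Prop :=
  fun t => exists X, C X /\ X t.

Lemma pred_ext {T : Type} (X Y : T -> Prop) : psub X Y -> psub Y X -> X = Y.
Proof.
  intros H1 H2. apply functional_extensionality; intro t.
  apply propositional_extensionality; split; auto.
Qed.

Section ZornS.
Context {T : Type} (F : (T -> Prop) -> Prop)
  (g : (T -> Prop) -> (T -> Prop)) (ginfl : forall X, psub X (g X)).

Inductive tw : (T -> Prop) -> Prop :=
| twg : forall X, tw X -> tw (g X)
| twu : forall C, (forall X, C X -> tw X) -> tw (bigU C).

Definition extr (c : T -> Prop) :=
  forall Y, tw Y -> psub Y c -> ~ psub c Y -> psub (g Y) c.

Lemma towerA : forall c, extr c -> forall Y, tw Y -> psub Y c \/ psub (g c) Y.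
Proof.
  intros c Hc Y HY. induction HY as [Z HZ IH | C HC IH].
  - destruct IH as [H|H].
    + destruct (classic (psub c Z)) as [H'|H'].
      * right. rewrite (pred_ext _ _ H H'). intros t Ht; exact Ht.
      * left. apply Hc; auto.
    + right. intros t Ht. apply ginfl, H, Ht.
  - destruct (classic (forall X, C X -> psub X c)) as [H|H].
    + left. intros t [X [HX Ht]]. exact (H X HX t Ht).
    + right. apply not_all_ex_not in H. destruct H as [X H].
      apply imply_to_and in H. destruct H as [HX H].
      destruct (IH X HX) as [H1|H1]; [contradiction|].
      intros t Ht. exists X. split; auto.
Qed.

Lemma towerB : forall c, tw c -> extr c.
Proof.
  intros c Hc. induction Hc as [Z HZ IH | C HC IH].
  - intros Y HY H1 H2. destruct (towerA Z IH Y HY) as [H|H].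
    + destruct (classic (psub Z Y)) as [H'|H'].
      * rewrite (pred_ext _ _ H H'). intros t Ht; exact Ht.
      * intros t Ht. apply ginfl. exact (IH Y HY H H' t Ht).
    + exfalso. apply H2. exact H.
  - intros Y HY H1 H2.
    assert (exists X, C X /\ ~ psub X Y) as [X [HX HXY]].
    { apply NNPP; intro Hn. apply H2. intros t [X [HX Ht]].
      apply NNPP; intro Hnt. apply Hn. exists X. split; [exact HX|].
      intro Hs. apply Hnt, Hs, Ht. }
    destruct (towerA X (IH X HX) Y HY) as [H|H].
    + intros t Ht. exists X. split; [exact HX|]. apply (IH X HX Y HY H HXY t Ht).
    + exfalso. apply HXY. intros t Ht. apply H, ginfl, Ht.
Qed.

Lemma tower_chain : forall X Y, tw X -> tw Y -> psub X Y \/ psub Y X.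
Proof.
  intros X Y HX HY. destruct (towerA Y (towerB Y HY) X HX) as [H|H]; auto.
  right. intros t Ht. apply H, ginfl, Ht.
Qed.
End ZornS.

Theorem zorn {T : Type} (F : (T -> Prop) -> Prop)
  (Fch : forall C, (forall X, C X -> F X) -> pchain C -> F (bigU C)) :
  exists X, F X /\ forall Y, F Y -> psub X Y -> psub Y X.
Proof.
  apply NNPP; intro H.
  assert (gex : forall X, exists Y, (F X -> F Y /\ ~ psub Y X) /\ psub X Y).
  { intro X. destruct (classic (F X)) as [HF|HF].
    - assert (exists Y, F Y /\ psub X Y /\ ~ psub Y X) as [Y HY].
      { apply NNPP; intro Hn. apply H. exists X. split; auto.
        intros Y HY HXY. apply NNPP; intro Hn2. apply Hn. exists Y; auto. }
      exists Y. intuition.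
    - exists X. split; [tauto|]. intros t Ht; exact Ht. }
  set (g := fun X => proj1_sig (constructive_indefinite_description _ (gex X))).
  assert (gs : forall X, (F X -> F (g X) /\ ~ psub (g X) X) /\ psub X (g X)).
  { intro X. exact (proj2_sig (constructive_indefinite_description _ (gex X))). }
  assert (ginfl : forall X, psub X (g X)) by (intro X; apply gs).
  assert (twF : forall X, tw g X -> F X).
  { intros X HX. induction HX as [Z HZ IH | C HC IH].
    - apply gs, IH.
    - apply Fch; auto. intros X Y HX HY. apply (tower_chain g ginfl); auto. }
  set (U := bigU (tw g)).
  assert (HU : tw g U) by (apply twu; auto).
  assert (HgU : tw g (g U)) by (apply twg; auto).
  destruct (gs U) as [[_ Hn] _]; [apply twF; auto|].
  apply Hn. intros t Ht. exists (g U). split; auto.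
Qed.


Lemma inj_cantor : inj Cantor.to_nat.
Proof.
  intros p q H. rewrite <- (Cantor.cancel_of_to p), <- (Cantor.cancel_of_to q), H. reflexivity.
Qed.

Lemma card_le_trans (X Y Z : Type) : card_le X Y -> card_le Y Z -> card_le X Z.
Proof.
  intros [f Hf] [g Hg]. exists (fun x => g (f x)). intros a b H. apply Hf, Hg, H.
Qed.

Lemma card_le_refl (X : Type) : card_le X X.
Proof. exists (fun x => x). intros a b H; exact H. Qed.

Definition pinj {X Y : Type} (r : X * Y -> Prop) :=
  (forall x y y', r (x,y) -> r (x,y') -> y = y') /\
  (forall x x' y, r (x,y) -> r (x',y) -> x = x').

Lemma card_comp (X Y : Type) : card_le X Y \/ card_le Y X.
Proof.
  destruct (zorn (@pinj X Y)) as [r [[Hf Hi] Hm]].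
  - intros C HC Hch. split.
    + intros x y y' [R1 [H1 r1]] [R2 [H2 r2]].
      destruct (Hch R1 R2 H1 H2) as [S|S].
      * apply (proj1 (HC R2 H2) x); auto.
      * apply (proj1 (HC R1 H1) x); auto.
    + intros x x' y [R1 [H1 r1]] [R2 [H2 r2]].
      destruct (Hch R1 R2 H1 H2) as [S|S].
      * apply (proj2 (HC R2 H2) x x' y); auto.
      * apply (proj2 (HC R1 H1) x x' y); auto.
  - destruct (classic (forall x, exists y, r (x,y))) as [Hx|Hx].
    + left. exists (fun x => proj1_sig (constructive_indefinite_description _ (Hx x))).
      intros a b H. apply (Hi a b (proj1_sig (constructive_indefinite_description _ (Hx a)))).
      * exact (proj2_sig (constructive_indefinite_description _ (Hx a))).
      * rewrite H. exact (proj2_sig (constructive_indefinite_description _ (Hx b))).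
    + destruct (classic (forall y, exists x, r (x,y))) as [Hy|Hy].
      * right. exists (fun y => proj1_sig (constructive_indefinite_description _ (Hy y))).
        intros a b H. apply (Hf (proj1_sig (constructive_indefinite_description _ (Hy a)))).
        -- exact (proj2_sig (constructive_indefinite_description _ (Hy a))).
        -- rewrite H. exact (proj2_sig (constructive_indefinite_description _ (Hy b))).
      * exfalso. apply not_all_ex_not in Hx. apply not_all_ex_not in Hy.
        destruct Hx as [x0 Hx]. destruct Hy as [y0 Hy].
        set (r' := fun p => r p \/ p = (x0,y0)).
        assert (Hr' : pinj r').
        { split.
          - intros x y y' [H1|H1] [H2|H2].
            + eauto.
            + injection H2; intros; subst. exfalso. apply Hx. eauto.
            + injection H1; intros; subst. exfalso. apply Hx. eauto.
            + congruence.
          - intros x x' y [H1|H1] [H2|H2].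
            + eauto.
            + injection H2; intros; subst. exfalso. apply Hy. eauto.
            + injection H1; intros; subst. exfalso. apply Hy. eauto.
            + congruence. }
        assert (Hs : psub r' r).
        { apply Hm; auto. intros p Hp. left; exact Hp. }
        apply Hx. exists y0. apply Hs. right. reflexivity.
Qed.

Lemma pinj_chain {X Y : Type} (P : (X*Y -> Prop) -> Prop) C :
  (forall R, C R -> P R /\ pinj R) -> pchain C -> pinj (bigU C).
Proof.
  intros HC Hch. split.
  - intros x y y' [R1 [H1 r1]] [R2 [H2 r2]].
    destruct (Hch R1 R2 H1 H2) as [S|S].
    + apply (proj1 (proj2 (HC R2 H2)) x); auto.
    + apply (proj1 (proj2 (HC R1 H1)) x); auto.
  - intros x x' y [R1 [H1 r1]] [R2 [H2 r2]].
    destruct (Hch R1 R2 H1 H2) as [S|S].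
    + apply (proj2 (proj2 (HC R2 H2)) x x' y); auto.
    + apply (proj2 (proj2 (HC R1 H1)) x x' y); auto.
Qed.

Lemma sig_eq_pi {A : Type} {P : A -> Prop} (a b : {x | P x}) :
  proj1_sig a = proj1_sig b -> a = b.
Proof.
  destruct a as [a Ha], b as [b Hb]; simpl; intro H; subst. f_equal. apply proof_irrelevance.
Qed.

Definition absF (Th : Type) (r : (Th*nat)*Th -> Prop) :=
  pinj r /\ (forall t k k' u, r ((t,k),u) -> exists u', r ((t,k'),u')) /\
  (forall a u, r (a,u) -> exists u', r ((u,0),u')).

Lemma absorb (Th : Type) : card_le nat Th -> card_le (Th*nat) Th.
Proof.
  intros [c0 Hc0].
  destruct (zorn (absF Th)) as [r [[[Hf Hi] [Hd Him]] Hm]].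
  { intros C HC Hch. split; [|split].
    - apply (pinj_chain (fun _ => True)); auto. intros R HR; split; auto. apply HC; auto.
    - intros t k k' u [R [HR Hr]]. destruct (proj1 (proj2 (HC R HR)) t k k' u Hr) as [u' Hu'].
      exists u'. exists R; auto.
    - intros a u [R [HR Hr]]. destruct (proj2 (proj2 (HC R HR)) a u Hr) as [u' Hu'].
      exists u'. exists R; auto. }
  set (S := fun t => exists u, r ((t,0),u)).
  assert (HdS : forall t k u, r ((t,k),u) -> S t).
  { intros t k u H. destruct (Hd t k 0 u H) as [u' Hu']. exists u'; exact Hu'. }
  assert (HimS : forall a u, r (a,u) -> S u).
  { intros a u H. destruct (Him a u H) as [u' Hu']. exists u'; exact Hu'. }
  destruct (card_comp nat {t | ~ S t}) as [[c Hc]|[d Hd']].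
  - exfalso.
    set (cc := fun k => proj1_sig (c k)).
    assert (ccS : forall k, ~ S (cc k)) by (intro k; exact (proj2_sig (c k))).
    assert (ccI : forall k l, cc k = cc l -> k = l).
    { intros k l H. apply Hc, sig_eq_pi, H. }
    set (r' := fun p => r p \/ exists k j, p = ((cc k, j), cc (Cantor.to_nat (k,j)))).
    assert (Hr' : absF Th r').
    { split; [split|split].
      - intros x y y' [H1|[k1 [j1 E1]]] [H2|[k2 [j2 E2]]].
        + eauto.
        + injection E2; intros; subst. exfalso. apply (ccS k2). eapply HdS; eauto.
        + injection E1; intros; subst. exfalso. apply (ccS k1). eapply HdS; eauto.
        + injection E1 as Ex1 Ey1. injection E2 as Ex2 Ey2. subst y y'.
          rewrite Ex1 in Ex2. injection Ex2 as Ek Ej. apply ccI in Ek. subst. reflexivity.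
      - intros x x' y [H1|[k1 [j1 E1]]] [H2|[k2 [j2 E2]]].
        + eauto.
        + injection E2; intros; subst. exfalso. eapply ccS. eapply HimS; eauto.
        + injection E1; intros; subst. exfalso. eapply ccS. eapply HimS; eauto.
        + injection E1 as Ex1 Ey1. injection E2 as Ex2 Ey2. subst x x'.
          rewrite Ey1 in Ey2. pose proof (inj_cantor (k1,j1) (k2,j2) (ccI _ _ Ey2)) as Ek.
          injection Ek as Ek Ej. subst. reflexivity.
      - intros t k k' u [H1|[k1 [j1 E1]]].
        + destruct (Hd t k k' u H1) as [u' Hu']. exists u'. left; exact Hu'.
        + injection E1; intros; subst. eexists. right. exists k1, k'. reflexivity.
      - intros a u [H1|[k1 [j1 E1]]].
        + destruct (Him a u H1) as [u' Hu']. exists u'. left; exact Hu'.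
        + injection E1; intros; subst. eexists. right.
          exists (Cantor.to_nat (k1,j1)), 0. reflexivity. }
    assert (Hs : psub r' r) by (apply Hm; auto; intros p Hp; left; exact Hp).
    apply (ccS 0). exists (cc (Cantor.to_nat (0,0))). apply Hs. right. exists 0, 0. reflexivity.
  - destruct (classic (exists t, S t)) as [[t0 Ht0]|Hn].
    + assert (exphi : forall t k, exists u, S t -> r ((t,k),u)).
      { intros t k. destruct (classic (S t)) as [[u Hu]|H].
        - destruct (Hd t 0 k u Hu) as [u' Hu']. exists u'; auto.
        - exists t. intro; contradiction. }
      set (phi := fun t k => proj1_sig (constructive_indefinite_description _ (exphi t k))).
      assert (phis : forall t k, S t -> r ((t,k), phi t k)).
      { intros t k. exact (proj2_sig (constructive_indefinite_description _ (exphi t k))). }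
      assert (phiI : forall t k t' k', S t -> S t' -> phi t k = phi t' k' -> t = t' /\ k = k').
      { intros t k t' k' H1 H2 E. pose proof (phis t k H1). pose proof (phis t' k' H2).
        rewrite E in H. pose proof (Hi _ _ _ H H0). injection H3; auto. }
      assert (phiS : forall t k, S t -> S (phi t k)).
      { intros t k H. eapply HimS. apply phis, H. }
      set (e := fun k => Nat.iter k (fun u => phi u 0) (phi t0 1)).
      assert (eS : forall k, S (e k)).
      { induction k; simpl; apply phiS; auto. }
      assert (eI : forall k l, e k = e l -> k = l).
      { induction k; intros [|l] E; simpl in E; auto.
        - apply phiI in E; try apply eS; auto. destruct E; discriminate.
        - apply phiI in E; try apply eS; auto. destruct E; discriminate.
        - apply phiI in E; try apply eS. destruct E. f_equal. apply IHk; auto. }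
      exists (fun p : Th * nat => let (x,j) := p in
        match excluded_middle_informative (S x) with
        | left _ => phi x (2*j)
        | right H => phi (e (d (exist _ x H))) (2*j+1) end).
      intros [x j] [x' j'].
      destruct (excluded_middle_informative (S x)) as [H1|H1];
      destruct (excluded_middle_informative (S x')) as [H2|H2]; intro E.
      * apply phiI in E; auto. destruct E; subst. f_equal. lia.
      * apply phiI in E; auto. destruct E; lia.
      * apply phiI in E; auto. destruct E; lia.
      * apply phiI in E; auto. destruct E as [E1 E2]. apply eI, Hd' in E1.
        injection E1; intros; subst. f_equal. lia.
    + assert (dd : card_le Th nat).
      { exists (fun t => d (exist _ t (fun H => Hn (ex_intro _ t H)))).
        intros a b E. apply Hd' in E. injection E; auto. }
      destruct dd as [dd Hdd].
      exists (fun p => c0 (Cantor.to_nat (dd (fst p), snd p))).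
      intros [a j] [b k] E. apply Hc0, inj_cantor in E. simpl in E.
      injection E; intros; subst. apply Hdd in H0. subst; reflexivity.
Qed.

Definition pif {T : Type} (P : Prop) (a b : T) : T :=
  if excluded_middle_informative P then a else b.
Lemma pif_t {T : Type} (P : Prop) (a b : T) : P -> pif P a b = a.
Proof. intro H. unfold pif. destruct (excluded_middle_informative P); tauto. Qed.
Lemma pif_f {T : Type} (P : Prop) (a b : T) : ~ P -> pif P a b = b.
Proof. intro H. unfold pif. destruct (excluded_middle_informative P); tauto. Qed.

Lemma small_empty (Th : Type) {X : Type} : small Th (fun _ : X => False).
Proof. exists (fun p => False_rect Th (proj2_sig p)). intros [a Ha]; destruct Ha. Qed.

Lemma small_sub (Th : Type) {X : Type} (P Q : X -> Prop) :
  psub P Q -> small Th Q -> small Th P.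
Proof.
  intros H [f Hf]. exists (fun p => f (exist _ (proj1_sig p) (H _ (proj2_sig p)))).
  intros a b E. apply Hf in E. apply sig_eq_pi. injection E; auto.
Qed.

Lemma small_union (Th : Type) {X : Type} (P Q : X -> Prop) :
  card_le nat Th -> small Th P -> small Th Q -> small Th (fun x => P x \/ Q x).
Proof.
  intros Hn [f Hf] [g Hg]. destruct (absorb Th Hn) as [k Hk].
  exists (fun p => match excluded_middle_informative (P (proj1_sig p)) with
          | left H => k (f (exist _ _ H), 0)
          | right H => k (g (exist _ (proj1_sig p) (or_ind (fun a => False_ind _ (H a)) (fun b => b) (proj2_sig p))), 1) end).
  intros [a Ha] [b Hb]; simpl.
  destruct (excluded_middle_informative (P a)) as [H1|H1];
  destruct (excluded_middle_informative (P b)) as [H2|H2]; intro E; apply Hk in E.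
  - assert (E1 := f_equal fst E). simpl in E1.
    apply Hf in E1. injection E1; intros; subst. apply sig_eq_pi; reflexivity.
  - assert (E1 := f_equal snd E). discriminate.
  - assert (E1 := f_equal snd E). discriminate.
  - assert (E1 := f_equal fst E). simpl in E1.
    apply Hg in E1. injection E1; intros; subst. apply sig_eq_pi; reflexivity.
Qed.

Lemma small_img (Th : Type) {X Y : Type} (P : X -> Prop) (g : X -> Y -> Prop) :
  (forall x y y', g x y -> g x y' -> y = y') -> small Th P ->
  small Th (fun y => exists x, P x /\ g x y).
Proof.
  intros Hfun [f Hf].
  exists (fun q => let w := constructive_indefinite_description _ (proj2_sig q) in
    f (exist _ (proj1_sig w) (proj1 (proj2_sig w)))).
  intros [a Ha] [b Hb]; simpl. intro E. apply Hf in E. injection E; intro E'.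
  apply sig_eq_pi; simpl. revert E'.
  destruct (constructive_indefinite_description _ Ha) as [x [Hx1 Hx2]].
  destruct (constructive_indefinite_description _ Hb) as [x' [Hx1' Hx2']].
  simpl. intro E'. subst x'. eapply Hfun; eauto.
Qed.


Arguments gA1 {A V ar M1 M2} g _.
Arguments gA2 {A V ar M1 M2} g _.
Arguments gh1 {A V ar M1 M2} g _.
Arguments gh2 {A V ar M1 M2} g _.
Arguments gg {A V ar M1 M2} g _ _.
Arguments gb {A V ar M1 M2} g.
Arguments gn {A V ar M1 M2} g.

Lemma wf_ord {A : Type} (R : A -> A -> Prop) : well_founded R -> well_founded (ord_le_lt R).
Proof.
  intros wf.
  assert (HS : forall a, Acc (ord_le_lt R) (Some a)).
  { intro a. induction a as [a IH] using (well_founded_induction wf).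
    constructor. intros [b|] Hb; simpl in Hb; [apply IH; exact Hb|contradiction]. }
  intros [a|]; [apply HS|]. constructor. intros [b|] Hb; simpl in Hb; [apply HS|contradiction].
Qed.

Lemma win_gen (Th : Type) {A : Type} (R : A -> A -> Prop) (wf : well_founded R)
  {V : Type} {ar : V -> nat} (M1 M2 : structure V ar) (Inv : gstate M1 M2 -> Prop)
  (H1 : forall s b' A', Inv s -> ais_legal1 Th R M1 M2 s b' A' ->
        exists s', iso_resp1 Th M1 M2 s b' A' s' /\ Inv s')
  (H2 : forall s b' A', Inv s -> ais_legal2 Th R M1 M2 s b' A' ->
        exists s', iso_resp2 Th M1 M2 s b' A' s' /\ Inv s') :
  forall s, Inv s -> iso_wins Th R M1 M2 s.
Proof.
  intro s. remember (gb s) as b eqn:Hb. revert s Hb.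
  induction b as [b IH] using (well_founded_induction (wf_ord R wf)).
  intros s Hb HI. constructor.
  - intros b' A' HL. destruct (H1 s b' A' HI HL) as [s' [Hr HI']].
    exists s'. split; auto. apply (IH (gb s')); auto.
    destruct Hr as [[_ [E _]] _]. rewrite E, Hb. apply HL.
  - intros b' A' HL. destruct (H2 s b' A' HI HL) as [s' [Hr HI']].
    exists s'. split; auto. apply (IH (gb s')); auto.
    destruct Hr as [[_ [E _]] _]. rewrite E, Hb. apply HL.
Qed.

Lemma build1 (Th : Type) {A V : Type} {ar : V -> nat} (M1 M2 : structure V ar)
  (s : gstate M1 M2) (b' : option A) (A' : carrier M1 -> Prop)
  (g' : carrier M1 -> carrier M2 -> Prop) (h1' : carrier M1 -> nat) (h2' : carrier M2 -> nat) :
  card_le nat Th -> is_state Th M1 M2 s ->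
  (forall x, gA1 s x -> A' x) -> small Th A' ->
  (forall x y, gg s x y -> g' x y) ->
  (forall x, (exists y, g' x y) <-> (gA1 s x /\ gh1 s x < S (gn s))) ->
  (forall x y y', g' x y -> g' x y' -> y = y') ->
  (forall x x' y, g' x y -> g' x' y -> x = x') ->
  preserves_qf M1 M2 g' ->
  (forall x, gA1 s x -> h1' x = gh1 s x) ->
  (forall x, A' x -> ~ gA1 s x -> S (gn s) <= h1' x) ->
  (forall y, gA2 s y -> h2' y = gh2 s y) ->
  (forall x y, g' x y -> h2' y < S (gn s)) ->
  iso_resp1 Th M1 M2 s b' A'
    (Build_gstate M1 M2 A' (fun y => gA2 s y \/ exists x, g' x y) h1' h2' g' b' (S (gn s))).
Proof.
  intros Hn Hs HA' HsA' Hgg Hdom Hf Hi Hp Hh1 Hh1' Hh2 Hh2'.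
  destruct Hs as [HsA1 [HsA2 [Hsf [Hsi [Hsg [Hsp Hsh]]]]]].
  assert (St : is_state Th M1 M2
    (Build_gstate M1 M2 A' (fun y => gA2 s y \/ exists x, g' x y) h1' h2' g' b' (S (gn s)))).
  { split; [|split; [|split; [|split; [|split; [|split]]]]]; simpl; auto.
    - apply small_union; auto.
      apply (small_sub _ _ (fun y => exists x, gA1 s x /\ g' x y)).
      + intros y [x Hx]. exists x. split; auto. apply (proj1 (Hdom x)). eauto.
      + apply small_img; auto.
    - intros x y H. split; [|right; eauto]. apply HA'. apply (proj1 (Hdom x)). eauto.
    - intros x y H. split; eauto.
      assert (gA1 s x /\ gh1 s x < S (gn s)) as [Ha Hb] by (apply Hdom; eauto).
      rewrite Hh1; auto. }
  split; [|split; [|split; [|split]]]; simpl.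
  - split; [reflexivity|]. split; [reflexivity|]. split; [simpl; intros; try left; auto|].
    split; [simpl; intros; try left; auto|]. split; [auto|]. split; [auto|]. split; [auto|]. exact St.
  - tauto.
  - tauto.
  - auto.
  - auto.
Qed.

Lemma build2 (Th : Type) {A V : Type} {ar : V -> nat} (M1 M2 : structure V ar)
  (s : gstate M1 M2) (b' : option A) (A' : carrier M2 -> Prop)
  (g' : carrier M1 -> carrier M2 -> Prop) (h1' : carrier M1 -> nat) (h2' : carrier M2 -> nat) :
  card_le nat Th -> is_state Th M1 M2 s ->
  (forall y, gA2 s y -> A' y) -> small Th A' ->
  (forall x y, gg s x y -> g' x y) ->
  (forall y, (exists x, g' x y) <-> (gA2 s y /\ gh2 s y < S (gn s))) ->
  (forall x y y', g' x y -> g' x y' -> y = y') ->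
  (forall x x' y, g' x y -> g' x' y -> x = x') ->
  preserves_qf M1 M2 g' ->
  (forall y, gA2 s y -> h2' y = gh2 s y) ->
  (forall y, A' y -> ~ gA2 s y -> S (gn s) <= h2' y) ->
  (forall x, gA1 s x -> h1' x = gh1 s x) ->
  (forall x y, g' x y -> h1' x < S (gn s)) ->
  iso_resp2 Th M1 M2 s b' A'
    (Build_gstate M1 M2 (fun x => gA1 s x \/ exists y, g' x y) A' h1' h2' g' b' (S (gn s))).
Proof.
  intros Hn Hs HA' HsA' Hgg Hdom Hf Hi Hp Hh2 Hh2' Hh1 Hh1'.
  destruct Hs as [HsA1 [HsA2 [Hsf [Hsi [Hsg [Hsp Hsh]]]]]].
  assert (St : is_state Th M1 M2
    (Build_gstate M1 M2 (fun x => gA1 s x \/ exists y, g' x y) A' h1' h2' g' b' (S (gn s)))).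
  { split; [|split; [|split; [|split; [|split; [|split]]]]]; simpl; auto.
    - apply small_union; auto.
      apply (small_sub _ _ (fun x => exists y, gA2 s y /\ (fun y x => g' x y) y x)).
      + intros x [y Hy]. exists y. split; auto. apply (proj1 (Hdom y)). eauto.
      + apply small_img; auto. intros y x x' H1 H2. eapply Hi; eauto.
    - intros x y H. split; [right; eauto|]. apply HA'. apply (proj1 (Hdom y)). eauto.
    - intros x y H. split; eauto.
      assert (gA2 s y /\ gh2 s y < S (gn s)) as [Ha Hb] by (apply Hdom; eauto).
      rewrite Hh2; auto. }
  split; [|split; [|split; [|split]]]; simpl.
  - split; [reflexivity|]. split; [reflexivity|]. split; [simpl; intros; try left; auto|].
    split; [simpl; intros; try left; auto|]. split; [auto|]. split; [auto|]. split; [auto|]. exact St.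
  - tauto.
  - tauto.
  - auto.
  - auto.
Qed.

Lemma pq_empty (M1 M2 : structure Empty_set empty_ar) g : preserves_qf M1 M2 g.
Proof. intros s. destruct s. Qed.



Definition G1inv {A : Type} {X Y : structure Empty_set empty_ar} {Th : Type}
  (iota : Th * nat -> carrier X) (s : @gstate A _ _ X Y) (sig : carrier Y -> carrier X) : Prop :=
 (forall y, gA2 s y -> ~ (exists x, gg s x y) ->
    exists t m, sig y = iota (t,m) /\ gh2 s y = S m /\ m < gn s) /\
 (forall y y', gA2 s y -> gA2 s y' -> ~ (exists x, gg s x y) -> ~ (exists x, gg s x y') ->
    sig y = sig y' -> y = y') /\
 (forall y, gA2 s y -> ~ (exists x, gg s x y) -> forall z, ~ gg s (sig y) z) /\
 (forall y, gA2 s y -> ~ (exists x, gg s x y) -> gA1 s (sig y) ->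
    gh2 s y <= gh1 s (sig y) /\ (gh1 s (sig y) <= gh2 s y \/ gh1 s (sig y) <= gn s)) /\
 (forall t m, gn s <= m -> gA1 s (iota (t,m)) ->
    gh1 s (iota (t,m)) = S m /\ forall z, ~ gg s (iota (t,m)) z).

Section G1S.
Context (Th : Type) {A : Type} (R : A -> A -> Prop) (X Y : structure Empty_set empty_ar)
  (Hn : card_le nat Th) (iota : Th * nat -> carrier X) (Hiota : inj iota)
  (FR : forall (B : carrier Y -> Prop), small Th B -> forall (P : carrier X -> Prop), small Th P ->
     exists phi : carrier X -> carrier Y,
       (forall x x', P x -> P x' -> phi x = phi x' -> x = x') /\ (forall x, P x -> ~ B (phi x))).

Lemma ex_rho : forall x : carrier X, exists k, forall t m, iota (t,m) = x -> k = S m.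
Proof.
  intro x. destruct (classic (exists t m, iota (t,m) = x)) as [[t [m H]]|H].
  - exists (S m). intros t' m' H'. rewrite <- H in H'. apply Hiota in H'. injection H'; auto.
  - exists 0. intros t m H'. exfalso. apply H. eauto.
Qed.

Definition rho (x : carrier X) : nat := proj1_sig (constructive_indefinite_description _ (ex_rho x)).
Lemma rho_spec t m : rho (iota (t,m)) = S m.
Proof. unfold rho. destruct (constructive_indefinite_description _ _) as [k Hk]. simpl. eauto. Qed.

Definition Inv1 (s : @gstate A _ _ X Y) : Prop :=
  is_state Th X Y s /\ exists sig, G1inv iota s sig.

Lemma G1_side1 : forall s b' A', Inv1 s -> ais_legal1 Th R X Y s b' A' ->
        exists s', iso_resp1 Th X Y s b' A' s' /\ Inv1 s'.
Proof.
  intros s b' A' [Hs [sig [S0 [S1 [S2 [S3 S4]]]]]] [Hb [HA' HsA']].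
  pose proof Hs as Hs0.
  destruct Hs as [HsA1 [HsA2 [Hsf [Hsi [Hsg [Hsp Hsh]]]]]].
  set (n := gn s).
  set (unp := fun y => ~ exists x, gg s x y).
  set (need := fun x => gA1 s x /\ gh1 s x < S n /\ ~ exists z, gg s x z).
  set (own := fun x y => gA2 s y /\ unp y /\ sig y = x).
  set (D1 := fun x => need x /\ ~ exists y, own x y).
  destruct (FR (gA2 s) HsA2 D1) as [phi [Hphi1 Hphi2]].
  { apply (small_sub _ _ (gA1 s)); auto. intros x [[H _] _]; exact H. }
  set (g' := fun x y => gg s x y \/ (need x /\ own x y) \/ (D1 x /\ y = phi x)).
  set (h1' := fun x => pif (gA1 s x) (gh1 s x) (Nat.max (S n) (rho x))).
  set (h2' := fun y => pif (gA2 s y) (gh2 s y) n).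
  assert (Hdom : forall x, (exists y, g' x y) <-> (gA1 s x /\ gh1 s x < S n)).
  { intro x. split.
    - intros [y [H|[[[H1 [H2 _]] _]|[[[H1 [H2 _]] _] _]]]].
      + destruct (Hsh x y H). destruct (Hsg x y H). split; auto.
      + auto.
      + auto.
    - intros [H1 H2]. destruct (classic (exists z, gg s x z)) as [[z Hz]|Hz].
      + exists z. left; exact Hz.
      + destruct (classic (exists y, own x y)) as [[y Hy]|Hy].
        * exists y. right; left. split; auto. split; auto.
        * exists (phi x). right; right. split; auto. split; auto. split; auto. }
  assert (Hf : forall x y y', g' x y -> g' x y' -> y = y').
  { intros x y y' [H|[[Hnx Ho]|[Hd E]]] [H'|[[Hnx' Ho']|[Hd' E']]].
    - eauto.
    - exfalso. apply (proj2 (proj2 Hnx')). eauto.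
    - exfalso. apply (proj2 (proj2 (proj1 Hd'))). eauto.
    - exfalso. apply (proj2 (proj2 Hnx)). eauto.
    - destruct Ho as [Ha [Hu Hs]]. destruct Ho' as [Ha' [Hu' Hs']].
      apply S1; auto. congruence.
    - exfalso. apply (proj2 Hd'). eauto.
    - exfalso. apply (proj2 (proj2 (proj1 Hd))). eauto.
    - exfalso. apply (proj2 Hd). eauto.
    - congruence. }
  assert (Hi : forall x x' y, g' x y -> g' x' y -> x = x').
  { intros x x' y [H|[[Hnx Ho]|[Hd E]]] [H'|[[Hnx' Ho']|[Hd' E']]].
    - eauto.
    - exfalso. apply (proj1 (proj2 Ho')). eauto.
    - exfalso. subst y. apply (Hphi2 x' Hd'). apply (Hsg x _ H).
    - exfalso. apply (proj1 (proj2 Ho)). eauto.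
    - destruct Ho as [Ha [Hu Hs]]. destruct Ho' as [Ha' [Hu' Hs']]. congruence.
    - exfalso. subst y. apply (Hphi2 x' Hd'). apply Ho.
    - exfalso. subst y. apply (Hphi2 x Hd). apply (Hsg x' _ H').
    - exfalso. subst y. apply (Hphi2 x Hd). apply Ho'.
    - subst. apply Hphi1; auto. }
  exists (Build_gstate X Y A' (fun y => gA2 s y \/ exists x, g' x y) h1' h2' g' b' (S n)).
  split.
  - apply build1; auto.
    + intros x y H. left; exact H.
    + apply pq_empty.
    + intros x H. unfold h1'. rewrite pif_t; auto.
    + intros x H1 H2. unfold h1'. rewrite pif_f; auto. lia.
    + intros y H. unfold h2'. rewrite pif_t; auto.
    + intros x y [H|[[Hnx Ho]|[Hd E]]]; unfold h2'.
      * rewrite pif_t; [|apply (Hsg x y H)]. destruct (Hsh x y H). fold n. lia.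
      * destruct Ho as [Ha [Hu Hs]]. rewrite pif_t; auto.
        destruct Hnx as [Hx1 [Hx2 _]]. subst x.
        destruct (S3 y Ha Hu Hx1). lia.
      * rewrite pif_f; [lia|]. subst y. apply Hphi2; auto.
  - split.
    + apply (build1 Th X Y s b' A' g' h1' h2'); auto.
      * intros x y H. left; exact H.
      * apply pq_empty.
      * intros x H. unfold h1'. rewrite pif_t; auto.
      * intros x H1 H2. unfold h1'. rewrite pif_f; auto. lia.
      * intros y H. unfold h2'. rewrite pif_t; auto.
      * intros x y [H|[[Hnx Ho]|[Hd E]]]; unfold h2'.
        -- rewrite pif_t; [|apply (Hsg x y H)]. destruct (Hsh x y H). fold n. lia.
        -- destruct Ho as [Ha [Hu Hs]]. rewrite pif_t; auto.
           destruct Hnx as [Hx1 [Hx2 _]]. subst x.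
           destruct (S3 y Ha Hu Hx1). lia.
        -- rewrite pif_f; [lia|]. subst y. apply Hphi2; auto.
    + exists sig. unfold G1inv. simpl.
      assert (Hunp : forall y, (gA2 s y \/ exists x, g' x y) -> ~ (exists x, g' x y) ->
                  gA2 s y /\ unp y).
      { intros y [H|H] H'; [|contradiction]. split; auto. intros [x Hx]. apply H'. exists x. left; exact Hx. }
      assert (S2' : forall y, gA2 s y -> ~ (exists x, g' x y) -> forall z, ~ g' (sig y) z).
      { intros y Ha Hu z [H|[[Hnx Ho]|[Hd E]]].
        - refine (S2 y Ha _ z H). intros [x Hx]. apply Hu. exists x; left; exact Hx.
        - destruct Ho as [Ha' [Hu' Hs']].
          assert (z = y).
          { apply S1; auto. intros [x Hx]. apply Hu. exists x; left; exact Hx. }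
          subst z. apply Hu. exists (sig y). right; left. split; auto. split; auto.
        - apply (proj2 Hd). exists y. split; auto. split; auto.
          intros [x Hx]. apply Hu. exists x; left; exact Hx. }
      split; [|split; [|split; [|split]]].
      * intros y H1 H2. destruct (Hunp y H1 H2) as [Ha Hu].
        destruct (S0 y Ha Hu) as [t [m [E1 [E2 E3]]]]. exists t, m.
        unfold h2'. rewrite pif_t by exact Ha. split; [exact E1|]. split; [exact E2|]. fold n in E3. lia.
      * intros y y' H1 H1' H2 H2' E.
        destruct (Hunp y H1 H2). destruct (Hunp y' H1' H2'). apply S1; auto.
      * intros y H1 H2. destruct (Hunp y H1 H2) as [Ha Hu]. apply S2'; auto.
      * intros y H1 H2 H3. destruct (Hunp y H1 H2) as [Ha Hu].
        unfold h1', h2'. rewrite (pif_t (gA2 s y)); auto.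
        destruct (classic (gA1 s (sig y))) as [Hin|Hin].
        -- rewrite pif_t; auto. destruct (S3 y Ha Hu Hin) as [Q1 Q2]. split; auto.
           fold n in Q2. lia.
        -- rewrite pif_f; auto. destruct (S0 y Ha Hu) as [t [m [E1 [E2 E3]]]].
           rewrite E1, rho_spec. fold n in E3. lia.
      * intros t m Hm H. destruct (classic (gA1 s (iota (t,m)))) as [Hin|Hin].
        -- destruct (S4 t m) as [Q1 Q2]; [fold n; lia|auto|].
           unfold h1'. rewrite pif_t; auto. split; auto.
           intros z [Hz|[[Hnx _]|[[Hnx _] _]]].
           ++ apply (Q2 z Hz).
           ++ destruct Hnx as [_ [Hl _]]. lia.
           ++ destruct Hnx as [_ [Hl _]]. lia.
        -- unfold h1'. rewrite pif_f; auto. rewrite rho_spec. split; [lia|].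
           intros z [Hz|[[Hnx _]|[[Hnx _] _]]].
           ++ apply Hin, (Hsg _ _ Hz).
           ++ apply Hin, Hnx.
           ++ apply Hin, Hnx.
Qed.

Lemma G1_side2 : forall s b' A', Inv1 s -> ais_legal2 Th R X Y s b' A' ->
        exists s', iso_resp2 Th X Y s b' A' s' /\ Inv1 s'.
Proof.
  intros s b' A' [Hs [sig [S0 [S1 [S2 [S3 S4]]]]]] [Hb [HA' HsA']].
  pose proof Hs as Hs0.
  destruct Hs as [HsA1 [HsA2 [Hsf [Hsi [Hsg [Hsp Hsh]]]]]].
  pose proof Hn as [c0 _].
  pose proof HsA' as [ff Hff].
  set (ee := fun y => match excluded_middle_informative (A' y) with
                      | left H => ff (exist _ y H) | right _ => c0 0 end).
  assert (eeI : forall y y', A' y -> A' y' -> ee y = ee y' -> y = y').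
  { intros y y' H H' E. unfold ee in E.
    destruct (excluded_middle_informative (A' y)); [|contradiction].
    destruct (excluded_middle_informative (A' y')); [|contradiction].
    apply Hff in E. injection E; auto. }
  set (n := gn s).
  set (unp := fun y => ~ exists x, gg s x y).
  set (need2 := fun y => gA2 s y /\ gh2 s y < S n /\ unp y).
  set (g' := fun x y => gg s x y \/ (need2 y /\ x = sig y)).
  set (h2' := fun y => pif (gA2 s y) (gh2 s y) (S n)).
  set (h1' := fun x => pif (gA1 s x) (gh1 s x) n).
  set (sig' := fun y => pif (gA2 s y) (sig y) (iota (ee y, n))).
  assert (Hdom : forall y, (exists x, g' x y) <-> (gA2 s y /\ gh2 s y < S n)).
  { intro y. split.
    - intros [x [H|[[H1 [H2 _]] _]]].
      + destruct (Hsh x y H). destruct (Hsg x y H). split; auto.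
      + auto.
    - intros [H1 H2]. destruct (classic (exists x, gg s x y)) as [[x Hx]|Hx].
      + exists x. left; exact Hx.
      + exists (sig y). right. split; [split; [exact H1|split; [exact H2|exact Hx]]|reflexivity]. }
  assert (Hf : forall x y y', g' x y -> g' x y' -> y = y').
  { intros x y y' [H|[Hn2 E]] [H'|[Hn2' E']].
    - eauto.
    - exfalso. subst x. destruct Hn2' as [Ha [_ Hu]]. apply (S2 y' Ha Hu y H).
    - exfalso. subst x. destruct Hn2 as [Ha [_ Hu]]. apply (S2 y Ha Hu y' H').
    - destruct Hn2 as [Ha [_ Hu]]. destruct Hn2' as [Ha' [_ Hu']]. apply S1; auto. congruence. }
  assert (Hi : forall x x' y, g' x y -> g' x' y -> x = x').
  { intros x x' y [H|[Hn2 E]] [H'|[Hn2' E']].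
    - eauto.
    - exfalso. destruct Hn2' as [_ [_ Hu]]. apply Hu. eauto.
    - exfalso. destruct Hn2 as [_ [_ Hu]]. apply Hu. eauto.
    - congruence. }
  assert (Hh1 : forall x y, g' x y -> h1' x < S n).
  { intros x y [H|[Hn2 E]]; unfold h1'.
    - rewrite pif_t by apply (Hsg x y H). destruct (Hsh x y H). unfold n in *. lia.
    - subst x. destruct Hn2 as [Ha [Hl Hu]].
      destruct (classic (gA1 s (sig y))) as [Hin|Hin].
      + rewrite pif_t by exact Hin. destruct (S3 y Ha Hu Hin) as [_ [Q|Q]]; unfold n in *; lia.
      + rewrite pif_f by exact Hin. lia. }
  assert (B : iso_resp2 Th X Y s b' A'
    (Build_gstate X Y (fun x => gA1 s x \/ exists y, g' x y) A' h1' h2' g' b' (S n))).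
  { apply build2.
    - exact Hn.
    - exact Hs0.
    - exact HA'.
    - exact HsA'.
    - intros x y H. left; exact H.
    - exact Hdom.
    - exact Hf.
    - exact Hi.
    - apply pq_empty.
    - intros y H. unfold h2'. rewrite pif_t; auto.
    - intros y H1 H2. unfold h2'. rewrite pif_f; auto.
    - intros x H. unfold h1'. rewrite pif_t; auto.
    - exact Hh1. }
  exists (Build_gstate X Y (fun x => gA1 s x \/ exists y, g' x y) A' h1' h2' g' b' (S n)).
  split; [exact B|]. split; [apply B|].
  exists sig'. unfold G1inv. simpl.
  assert (Hold : forall y, gA2 s y -> ~ (exists x, g' x y) -> unp y).
  { intros y H Hu [x Hx]. apply Hu. exists x. left; exact Hx. }
  assert (S2'' : forall y, A' y -> ~ (exists x, g' x y) -> forall z, ~ g' (sig' y) z).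
  { intros y Hy Hu z. unfold sig'.
    destruct (classic (gA2 s y)) as [Ha|Ha].
    - rewrite pif_t by exact Ha. intros [H|[Hn2 E]].
      + apply (S2 y Ha (Hold y Ha Hu) z H).
      + destruct Hn2 as [Hz [Hl Hz']]. assert (z = y) by (apply S1; auto; apply Hold; auto).
        subst z. apply Hu. exists (sig y). right. split; [split; [exact Hz|split;[exact Hl|exact Hz']]|reflexivity].
    - rewrite pif_f by exact Ha. intros [H|[Hn2 E]].
      + destruct (Hsg _ _ H) as [H1 _]. destruct (S4 (ee y) n (le_n _) H1) as [_ Q].
        apply (Q z H).
      + destruct Hn2 as [Hz [_ Hz']]. destruct (S0 z Hz Hz') as [t [m [E1 [E2 E3]]]].
        rewrite E1 in E. apply Hiota in E. injection E; intros; subst. fold n in E3. lia. }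
  split; [|split; [|split; [|split]]].
  - intros y Hy Hu. unfold sig', h2'. destruct (classic (gA2 s y)) as [Ha|Ha].
    + rewrite !pif_t by exact Ha. destruct (S0 y Ha (Hold y Ha Hu)) as [t [m [E1 [E2 E3]]]].
      exists t, m. split; [exact E1|]. split; [exact E2|]. fold n in E3. lia.
    + rewrite !pif_f by exact Ha. exists (ee y), n. split; auto.
  - intros y y' Hy Hy' Hu Hu' E. unfold sig' in E.
    destruct (classic (gA2 s y)) as [Ha|Ha]; destruct (classic (gA2 s y')) as [Ha'|Ha'].
    + rewrite !pif_t in E by assumption. apply S1; auto; apply Hold; auto.
    + rewrite pif_t in E by assumption. rewrite pif_f in E by assumption.
      destruct (S0 y Ha (Hold y Ha Hu)) as [t [m [E1 [E2 E3]]]].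
      rewrite E1 in E. apply Hiota in E. injection E; intros; subst. fold n in E3. lia.
    + rewrite pif_f in E by assumption. rewrite pif_t in E by assumption.
      destruct (S0 y' Ha' (Hold y' Ha' Hu')) as [t [m [E1 [E2 E3]]]].
      rewrite E1 in E. apply Hiota in E. injection E; intros; subst. fold n in E3. lia.
    + rewrite !pif_f in E by assumption. apply Hiota in E. injection E; intros.
      apply eeI; auto.
  - exact S2''.
  - intros y Hy Hu [Hin|[z Hz]]; [|exfalso; apply (S2'' y Hy Hu z Hz)].
    unfold h1', h2'. rewrite (pif_t (gA1 s (sig' y))) by exact Hin.
    destruct (classic (gA2 s y)) as [Ha|Ha].
    + assert (Es : sig' y = sig y) by (unfold sig'; apply pif_t; exact Ha).
      rewrite Es in Hin |- *. rewrite (pif_t (gA2 s y)) by exact Ha.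
      destruct (S3 y Ha (Hold y Ha Hu) Hin) as [Q1 Q2].
      split; auto. fold n in Q2. lia.
    + assert (Es : sig' y = iota (ee y, n)) by (unfold sig'; apply pif_f; exact Ha).
      rewrite Es in Hin |- *. rewrite (pif_f (gA2 s y)) by exact Ha.
      destruct (S4 (ee y) n (le_n _) Hin) as [Q _].
      rewrite Q. split; lia.
  - intros t m Hm.
    assert (Hng : forall z, ~ g' (iota (t,m)) z).
    { intros z [H|[Hn2 E]].
      - destruct (Hsg _ _ H) as [H1 _]. destruct (S4 t m) as [_ Q]; auto. fold n; lia.
        apply (Q z H).
      - destruct Hn2 as [Hz [_ Hz']]. destruct (S0 z Hz Hz') as [t' [m' [E1 [E2 E3]]]].
        rewrite E1 in E. apply Hiota in E. injection E; intros; subst. fold n in E3. lia. }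
    intros [Hin|[z Hz]]; [|exfalso; apply (Hng z Hz)].
    destruct (S4 t m) as [Q _]; auto. fold n; lia.
    unfold h1'. rewrite pif_t by exact Hin. split; auto.
Qed.

Lemma start_state_empty (X' Y' : structure Empty_set empty_ar) :
  is_state Th X' Y' (@start A _ _ X' Y').
Proof.
  split; [apply small_empty|]. split; [apply small_empty|].
  repeat split; simpl; try tauto; apply pq_empty.
Qed.

Theorem G1 (wf : well_founded R) : E0 Th R X Y.
Proof.
  split.
  - apply start_state_empty.
  - apply (win_gen Th R wf X Y Inv1 G1_side1 G1_side2).
    split.
    + apply start_state_empty.
    + pose proof Hn as [c0 _]. exists (fun _ => iota (c0 0, 0)).
      unfold G1inv; simpl. repeat split; tauto.
Qed.
End G1S.


Definition Big (Th : Type) : structure Empty_set empty_ar :=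
  {| carrier := Th -> Prop; rel := fun (e : Empty_set) _ => match e return Prop with end |}.

Lemma FR_big (Th : Type) (Hn : card_le nat Th) :
  forall (B : (Th -> Prop) -> Prop), small Th B -> forall (Xc : Type) (P : Xc -> Prop), small Th P ->
  exists phi : Xc -> (Th -> Prop),
    (forall x x', P x -> P x' -> phi x = phi x' -> x = x') /\ (forall x, P x -> ~ B (phi x)).
Proof.
  intros B [j Hj] Xc P [k Hk]. destruct (absorb Th Hn) as [kap Hkap].
  exists (fun x u => (exists t, u = kap (t,0) /\ ~ (exists Z : {Z | B Z}, j Z = t /\ proj1_sig Z u))
                 \/ (exists H : P x, u = kap (k (exist _ x H), 1))).
  split.
  - intros x x' Hx Hx' E.
    assert (Hu := f_equal (fun F => F (kap (k (exist _ x Hx), 1))) E). simpl in Hu.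
    assert (Hin : exists H : P x', kap (k (exist _ x Hx), 1) = kap (k (exist _ x' H), 1)).
    { assert (HL : (exists t, kap (k (exist _ x Hx), 1) = kap (t,0) /\ ~ (exists Z : {Z | B Z}, j Z = t /\ proj1_sig Z (kap (k (exist _ x Hx), 1))))
                 \/ (exists H : P x', kap (k (exist _ x Hx), 1) = kap (k (exist _ x' H), 1))).
      { rewrite <- Hu. right. exists Hx. reflexivity. }
      destruct HL as [[t [E1 _]]|H].
      - apply Hkap in E1. injection E1; intros; discriminate.
      - exact H. }
    destruct Hin as [H E2]. apply Hkap in E2. injection E2; intro E3. apply Hk in E3.
    injection E3; auto.
  - intros x Hx HB.
    set (Z0 := exist B _ HB). set (t := j Z0). set (u := kap (t,0)).
    set (F := fun u => (exists t, u = kap (t,0) /\ ~ (exists Z : {Z | B Z}, j Z = t /\ proj1_sig Z u))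
                 \/ (exists H : P x, u = kap (k (exist _ x H), 1))).
    assert (key : F u <-> ~ F u).
    { split.
      - intros [[t' [E1 E2]]|[H E1]] Hu.
        + unfold u in E1. apply Hkap in E1. injection E1; intro; subst t'.
          apply E2. exists Z0. split; auto.
        + unfold u in E1. apply Hkap in E1. injection E1; intros; discriminate.
      - intro Hn'. left. exists t. split; auto. intros [Z [E1 E2]].
        assert (Z = Z0) by (apply Hj; auto). subst Z. apply Hn'. exact E2. }
    tauto.
Qed.

Lemma E1_big (Th : Type) (Hn : card_le nat Th) {A : Type} (R : A -> A -> Prop) (wf : well_founded R)
  (M : structure Empty_set empty_ar) (HM : card_le Th (carrier M)) : E1 Th R M (Big Th).
Proof.
  destruct HM as [f Hf]. destruct (absorb Th Hn) as [kap Hkap].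
  apply rst_step. apply (G1 Th R M (Big Th) Hn (fun p => f (kap p))).
  - intros a b E. apply Hkap, Hf, E.
  - intros B HB P HP. apply (FR_big Th Hn B HB _ P HP).
  - exact wf.
Qed.

Lemma part23 (Th : Type) (Hn : card_le nat Th) {A : Type} (R : A -> A -> Prop) (wf : well_founded R)
  (M1 M2 : structure Empty_set empty_ar) :
  card_le Th (carrier M1) -> card_le Th (carrier M2) -> E1 Th R M1 M2.
Proof.
  intros H1 H2. apply rst_trans with (Big Th).
  - apply E1_big; auto.
  - apply rst_sym. apply E1_big; auto.
Qed.

Lemma part2 (Th : Type) (Hn : card_le nat Th) {A : Type} (R : A -> A -> Prop) (wf : well_founded R)
  (M1 M2 : structure Empty_set empty_ar) :
  ~ card_le (carrier M1) Th -> ~ card_le (carrier M2) Th -> E1 Th R M1 M2.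
Proof.
  intros H1 H2. apply part23; auto.
  - destruct (card_comp Th (carrier M1)); tauto.
  - destruct (card_comp Th (carrier M2)); tauto.
Qed.


Definition swapS {A V : Type} {ar : V -> nat} {M1 M2 : structure V ar} (s : @gstate A V ar M1 M2)
  : gstate M2 M1 :=
  Build_gstate M2 M1 (gA2 s) (gA1 s) (gh2 s) (gh1 s) (fun y x => gg s x y) (gb s) (gn s).

Lemma swapK {A V : Type} {ar : V -> nat} {M1 M2 : structure V ar} (s : @gstate A V ar M1 M2) :
  swapS (swapS s) = s.
Proof. destruct s; reflexivity. Qed.

Lemma swap_state (Th : Type) {A V : Type} {ar : V -> nat} {M1 M2 : structure V ar} (s : @gstate A V ar M1 M2) :
  is_state Th M1 M2 s -> is_state Th M2 M1 (swapS s).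
Proof.
  intros [H1 [H2 [H3 [H4 [H5 [H6 H7]]]]]].
  split; [exact H2|]. split; [exact H1|]. split; [simpl; eauto|]. split; [simpl; eauto|].
  split; [simpl; intros x y H; destruct (H5 y x H); auto|].
  split; [|simpl; intros x y H; destruct (H7 y x H); auto].
  intros s0 a b H. simpl in H. symmetry. apply H6. exact H.
Qed.

Lemma swap_R12 (Th : Type) {A V : Type} {ar : V -> nat} {M1 M2 : structure V ar}
  (s s' : @gstate A V ar M1 M2) b A' :
  iso_resp1 Th M1 M2 s b A' s' -> iso_resp2 Th M2 M1 (swapS s) b A' (swapS s').
Proof.
  intros [[E1 [E2 [E3 [E4 [E5 [E6 [E7 E8]]]]]]] [F1 [F2 [F3 F4]]]].
  split.
  { split; [exact E1|split; [exact E2|split; [exact E4|split; [exact E3|split; [exact E6|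
    split; [exact E5|split; [intros x y H; apply E7; exact H|apply swap_state; exact E8]]]]]]]. }
  split; [|split; [|split]]; simpl; auto.
Qed.

Lemma swap_R21 (Th : Type) {A V : Type} {ar : V -> nat} {M1 M2 : structure V ar}
  (s s' : @gstate A V ar M1 M2) b A' :
  iso_resp2 Th M1 M2 s b A' s' -> iso_resp1 Th M2 M1 (swapS s) b A' (swapS s').
Proof.
  intros [[E1 [E2 [E3 [E4 [E5 [E6 [E7 E8]]]]]]] [F1 [F2 [F3 F4]]]].
  split.
  { split; [exact E1|split; [exact E2|split; [exact E4|split; [exact E3|split; [exact E6|
    split; [exact E5|split; [intros x y H; apply E7; exact H|apply swap_state; exact E8]]]]]]]. }
  split; [|split; [|split]]; simpl; auto.
Qed.

Lemma wins_inv (Th : Type) {A : Type} (R : A -> A -> Prop) {V : Type} {ar : V -> nat}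
  {M1 M2 : structure V ar} (s : @gstate A V ar M1 M2) :
  iso_wins Th R M1 M2 s ->
  (forall b' A', ais_legal1 Th R M1 M2 s b' A' -> exists s', iso_resp1 Th M1 M2 s b' A' s' /\ iso_wins Th R M1 M2 s') /\
  (forall b' A', ais_legal2 Th R M1 M2 s b' A' -> exists s', iso_resp2 Th M1 M2 s b' A' s' /\ iso_wins Th R M1 M2 s').
Proof. intro H. destruct H as [s H1 H2]. auto. Qed.

Lemma swap_wins (Th : Type) {A : Type} (R : A -> A -> Prop) (wf : well_founded R)
  {V : Type} {ar : V -> nat}
  {M1 M2 : structure V ar} (s : @gstate A V ar M1 M2) :
  iso_wins Th R M1 M2 s -> iso_wins Th R M2 M1 (swapS s).
Proof.
  intro H. rewrite <- (swapK s) in H.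
  apply (win_gen Th R wf M2 M1 (fun t => iso_wins Th R M1 M2 (swapS t))); [| |exact H].
  - intros t b' A' Ht HL. destruct (wins_inv _ _ _ Ht) as [_ H2].
    destruct (H2 b' A' HL) as [s' [Hr Hw]].
    exists (swapS s'). split.
    + rewrite <- (swapK t). apply swap_R21. exact Hr.
    + rewrite swapK. exact Hw.
  - intros t b' A' Ht HL. destruct (wins_inv _ _ _ Ht) as [H1 _].
    destruct (H1 b' A' HL) as [s' [Hr Hw]].
    exists (swapS s'). split.
    + rewrite <- (swapK t). apply swap_R12. exact Hr.
    + rewrite swapK. exact Hw.
Qed.

Lemma win_sym (Th : Type) {A : Type} (R : A -> A -> Prop) (wf : well_founded R)
  {V : Type} {ar : V -> nat} (M1 M2 : structure V ar)
  (I12 : gstate M1 M2 -> Prop) (I21 : @gstate A V ar M2 M1 -> Prop)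
  (S12 : forall s, I12 s -> I21 (swapS s)) (S21 : forall t, I21 t -> I12 (swapS t))
  (H1 : forall s b' A', I12 s -> ais_legal1 Th R M1 M2 s b' A' ->
        exists s', iso_resp1 Th M1 M2 s b' A' s' /\ I12 s')
  (H2 : forall t b' A', I21 t -> ais_legal1 Th R M2 M1 t b' A' ->
        exists t', iso_resp1 Th M2 M1 t b' A' t' /\ I21 t') :
  forall s, I12 s -> iso_wins Th R M1 M2 s.
Proof.
  apply win_gen; auto.
  intros s b' A' HI HL. destruct (H2 (swapS s) b' A' (S12 s HI) HL) as [t [Hr Ht]].
  exists (swapS t). split; auto. rewrite <- (swapK s). apply swap_R12. exact Hr.
Qed.


Definition Qr {Z L : Type} (u : Z -> L) (x : L) : Prop := exists z, u z = x.

Definition SumHyp {V V' : Type} {ar : V -> nat} {ar' : V' -> nat}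
  (Z1 Z2 : structure V' ar') (L1 L2 : structure V ar)
  (u1 : carrier Z1 -> carrier L1) (u2 : carrier Z2 -> carrier L2)
  (fr : carrier L1 -> carrier L2 -> Prop) : Prop :=
  inj u1 /\ inj u2 /\
  (forall x y, fr x y -> ~ Qr u1 x /\ ~ Qr u2 y) /\
  (forall x y y', fr x y -> fr x y' -> y = y') /\
  (forall x x' y, fr x y -> fr x' y -> x = x') /\
  (forall x, ~ Qr u1 x -> exists y, fr x y) /\
  (forall y, ~ Qr u2 y -> exists x, fr x y) /\
  (forall gz : carrier Z1 -> carrier Z2 -> Prop, preserves_qf Z1 Z2 gz ->
     forall s a' b', (forall i, gz (a' i) (b' i)) ->
     (rel L1 s (fun i => u1 (a' i)) <-> rel L2 s (fun i => u2 (b' i)))) /\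
  (forall s a b, (forall i, (Qr u1 (a i) /\ Qr u2 (b i)) \/ fr (a i) (b i)) ->
     (exists i, ~ Qr u1 (a i)) -> (rel L1 s a <-> rel L2 s b)).

Lemma SumHyp_sym {V V' : Type} {ar : V -> nat} {ar' : V' -> nat}
  (Z1 Z2 : structure V' ar') (L1 L2 : structure V ar) u1 u2 fr :
  SumHyp Z1 Z2 L1 L2 u1 u2 fr -> SumHyp Z2 Z1 L2 L1 u2 u1 (fun y x => fr x y).
Proof.
  intros [U1 [U2 [F0 [Ff [Fi [Ft1 [Ft2 [HQ HC]]]]]]]].
  split; [exact U2|]. split; [exact U1|].
  split; [intros y x H; destruct (F0 x y H); auto|].
  split; [intros y x x' H H'; eapply Fi; eauto|].
  split; [intros y y' x H H'; eapply Ff; eauto|].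
  split; [exact Ft2|]. split; [exact Ft1|]. split.
  - intros gz Hgz s a' b' H. symmetry. apply (HQ (fun a b => gz b a)); auto.
    intros s0 a b H'. symmetry. apply Hgz. exact H'.
  - intros s a b H [i Hi]. symmetry. apply HC.
    + intro j. destruct (H j) as [[H1 H2]|H1].
      * left; split; assumption.
      * right. exact H1.
    + exists i. destruct (H i) as [[H1 H2]|H1]; [contradiction|]. apply (F0 _ _ H1).
Qed.

Definition SumCorr {A V V' : Type} {ar : V -> nat} {ar' : V' -> nat}
  {Z1 Z2 : structure V' ar'} {L1 L2 : structure V ar}
  (u1 : carrier Z1 -> carrier L1) (u2 : carrier Z2 -> carrier L2)
  (fr : carrier L1 -> carrier L2 -> Prop) (sZ : @gstate A _ _ Z1 Z2) (sL : @gstate A _ _ L1 L2) : Prop :=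
  gn sZ = gn sL /\ gb sZ = gb sL /\
  (forall z, gA1 sL (u1 z) <-> gA1 sZ z) /\ (forall w, gA2 sL (u2 w) <-> gA2 sZ w) /\
  (forall z, gA1 sZ z -> gh1 sL (u1 z) = gh1 sZ z) /\ (forall w, gA2 sZ w -> gh2 sL (u2 w) = gh2 sZ w) /\
  (forall z w, gg sL (u1 z) (u2 w) <-> gg sZ z w) /\
  (forall x y, gg sL x y -> (Qr u1 x <-> Qr u2 y)) /\
  (forall x y, gg sL x y -> ~ Qr u1 x -> fr x y) /\
  (forall x y, fr x y -> gA1 sL x -> gA2 sL y ->
     Nat.max (gh1 sL x) (gn sL) = Nat.max (gh2 sL y) (gn sL)).

Definition SumInv (Th : Type) {A : Type} (R : A -> A -> Prop) {V V' : Type} {ar : V -> nat} {ar' : V' -> nat}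
  {Z1 Z2 : structure V' ar'} {L1 L2 : structure V ar}
  (u1 : carrier Z1 -> carrier L1) (u2 : carrier Z2 -> carrier L2)
  (fr : carrier L1 -> carrier L2 -> Prop) (sL : @gstate A _ _ L1 L2) : Prop :=
  is_state Th L1 L2 sL /\ exists sZ, iso_wins Th R Z1 Z2 sZ /\ is_state Th Z1 Z2 sZ /\ SumCorr u1 u2 fr sZ sL.

Lemma SumCorr_sym {A V V' : Type} {ar : V -> nat} {ar' : V' -> nat}
  (Z1 Z2 : structure V' ar') (L1 L2 : structure V ar) u1 u2 fr sZ sL :
  SumHyp Z1 Z2 L1 L2 u1 u2 fr -> @SumCorr A _ _ _ _ _ _ _ _ u1 u2 fr sZ sL ->
  SumCorr u2 u1 (fun y x => fr x y) (swapS sZ) (swapS sL).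
Proof.
  intros [U1 [U2 [F0 _]]] [C1 [C2 [C3 [C4 [C5 [C6 [C7 [C8 [C9 C10]]]]]]]]].
  split; [exact C1|]. split; [exact C2|]. split; [exact C4|]. split; [exact C3|].
  split; [exact C6|]. split; [exact C5|]. split; [simpl; intros; apply C7|].
  split; [simpl; intros x y H; symmetry; apply C8; exact H|].
  split.
  - simpl. intros y x H Hy. apply C9; auto. rewrite (C8 x y H). exact Hy.
  - simpl. intros y x H H1 H2. pose proof (C10 x y H H2 H1). lia.
Qed.

Section SumS.
Context (Th : Type) (Hn : card_le nat Th) {A : Type} (R : A -> A -> Prop)
  {V V' : Type} {ar : V -> nat} {ar' : V' -> nat}
  (Z1 Z2 : structure V' ar') (L1 L2 : structure V ar)
  (u1 : carrier Z1 -> carrier L1) (u2 : carrier Z2 -> carrier L2)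
  (fr : carrier L1 -> carrier L2 -> Prop)
  (HS : SumHyp Z1 Z2 L1 L2 u1 u2 fr).

Lemma sum_side1 : forall sL b' A', SumInv Th R u1 u2 fr sL -> ais_legal1 Th R L1 L2 sL b' A' ->
  exists sL', iso_resp1 Th L1 L2 sL b' A' sL' /\ SumInv Th R u1 u2 fr sL'.
Proof.
  destruct HS as [U1 [U2 [F0 [Ff [Fi [Ft1 [Ft2 [HQ HC]]]]]]]].
  intros sL b' A' [HsL [sZ [Hw [HsZ [C1 [C2 [C3 [C4 [C5 [C6 [C7 [C8 [C9 C10]]]]]]]]]]]]] [Hb [HA' HsA']].
  pose proof HsL as HsL0.
  destruct HsL as [LA1 [LA2 [Lf [Li [Lg [Lp Lh]]]]]].
  set (AZ' := fun z => A' (u1 z)).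
  assert (HLZ : ais_legal1 Th R Z1 Z2 sZ b' AZ').
  { split; [rewrite C2; exact Hb|]. split.
    - intros z H. apply HA', C3, H.
    - destruct HsA' as [k Hk]. exists (fun (p : {z | AZ' z}) => k (exist (fun x => A' x) (u1 (proj1_sig p)) (proj2_sig p))).
      intros [a Ha] [b Hb'] E. apply Hk in E. injection E; intro E'. apply U1 in E'.
      apply sig_eq_pi; exact E'. }
  destruct (wins_inv _ _ _ Hw) as [W1 _].
  destruct (W1 b' AZ' HLZ) as [sZ' [[[E1 [E2 [E3 [E4 [E5 [E6 [E7 E8]]]]]]] [G1 [G2 [G3 G4]]]] Hw']].
  pose proof E8 as E80.
  destruct E8 as [ZA1 [ZA2 [Zf [Zi [Zg [Zp Zh]]]]]].
  set (n := gn sL).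
  assert (Hn' : gn sZ' = S n) by (rewrite E1, C1; reflexivity).
  set (g' := fun x y => (exists z w, x = u1 z /\ y = u2 w /\ gg sZ' z w) \/
                        (fr x y /\ gA1 sL x /\ gh1 sL x < S n)).
  set (h1' := fun x => match excluded_middle_informative (Qr u1 x) with
     | left H => gh1 sZ' (proj1_sig (constructive_indefinite_description _ H))
     | right H => let y := proj1_sig (constructive_indefinite_description _ (Ft1 x H)) in
         pif (gA1 sL x) (gh1 sL x) (pif (gA2 sL y) (Nat.max (S n) (gh2 sL y)) (S n)) end).
  set (h2' := fun y => match excluded_middle_informative (Qr u2 y) with
     | left H => gh2 sZ' (proj1_sig (constructive_indefinite_description _ H))
     | right _ => pif (gA2 sL y) (gh2 sL y) n end).
  assert (h1in : forall z, h1' (u1 z) = gh1 sZ' z).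
  { intro z. unfold h1'. destruct (excluded_middle_informative (Qr u1 (u1 z))) as [H|H].
    - destruct (constructive_indefinite_description _ H) as [z' Hz']. simpl. apply U1 in Hz'. subst; reflexivity.
    - exfalso. apply H. exists z; reflexivity. }
  assert (h1out : forall x y, fr x y -> h1' x = pif (gA1 sL x) (gh1 sL x) (pif (gA2 sL y) (Nat.max (S n) (gh2 sL y)) (S n))).
  { intros x y Hxy. unfold h1'. destruct (excluded_middle_informative (Qr u1 x)) as [H|H].
    - exfalso. apply (proj1 (F0 x y Hxy)), H.
    - destruct (constructive_indefinite_description _ (Ft1 x H)) as [y' Hy']. simpl.
      rewrite (Ff x y' y Hy' Hxy). reflexivity. }
  assert (h2in : forall w, h2' (u2 w) = gh2 sZ' w).
  { intro w. unfold h2'. destruct (excluded_middle_informative (Qr u2 (u2 w))) as [H|H].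
    - destruct (constructive_indefinite_description _ H) as [w' Hw'']. simpl. apply U2 in Hw''. subst; reflexivity.
    - exfalso. apply H. exists w; reflexivity. }
  assert (h2out : forall y, ~ Qr u2 y -> h2' y = pif (gA2 sL y) (gh2 sL y) n).
  { intros y Hy. unfold h2'. destruct (excluded_middle_informative (Qr u2 y)); [contradiction|reflexivity]. }
  assert (Hsub : forall x y, gg sL x y -> g' x y).
  { intros x y H. destruct (classic (Qr u1 x)) as [[z Hz]|Hq].
    - subst x. assert (Qr u2 y) as [w Hw0] by (apply (C8 _ _ H); exists z; reflexivity).
      subst y. left. exists z, w. split; [reflexivity|]. split; [reflexivity|]. apply E7, C7, H.
    - right. split; [apply C9; auto|]. destruct (Lg x y H). destruct (Lh x y H). split; [assumption|].
      unfold n; lia. }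
  assert (Hdom : forall x, (exists y, g' x y) <-> (gA1 sL x /\ gh1 sL x < S n)).
  { intro x. split.
    - intros [y [[z [w [Ex [Ey Hg]]]]|[_ [H1 H2]]]].
      + subst. assert (Hd : exists w, gg sZ' z w) by eauto. apply G4 in Hd. destruct Hd as [Ha Hh].
        split; [apply C3; auto|]. rewrite C5 by auto. unfold n; rewrite <- C1; exact Hh.
      + auto.
    - intros [H1 H2]. destruct (classic (Qr u1 x)) as [[z Hz]|Hq].
      + subst x. assert (Hz : gA1 sZ z) by (apply C3; auto).
        assert (Hd : exists w, gg sZ' z w). { apply G4. split; [exact Hz|]. rewrite <- C5 by exact Hz. rewrite C1. exact H2. }
        destruct Hd as [w Hw0]. exists (u2 w). left. exists z, w. auto.
      + destruct (Ft1 x Hq) as [y Hy]. exists y. right. auto. }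
  assert (Hf : forall x y y', g' x y -> g' x y' -> y = y').
  { intros x y y' [[z [w [Ex [Ey Hg]]]]|[Hxy _]] [[z' [w' [Ex' [Ey' Hg']]]]|[Hxy' _]].
    - subst. apply U1 in Ex'. subst. f_equal. eapply Zf; eauto.
    - exfalso. apply (proj1 (F0 _ _ Hxy')). exists z; auto.
    - exfalso. apply (proj1 (F0 _ _ Hxy)). exists z'; auto.
    - eapply Ff; eauto. }
  assert (Hi : forall x x' y, g' x y -> g' x' y -> x = x').
  { intros x x' y [[z [w [Ex [Ey Hg]]]]|[Hxy _]] [[z' [w' [Ex' [Ey' Hg']]]]|[Hxy' _]].
    - subst. apply U2 in Ey'. subst. f_equal. eapply Zi; eauto.
    - exfalso. apply (proj2 (F0 _ _ Hxy')). exists w. auto.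
    - exfalso. apply (proj2 (F0 _ _ Hxy)). exists w'. auto.
    - eapply Fi; eauto. }
  assert (Hp : preserves_qf L1 L2 g').
  { intros s a b Hab. destruct (classic (exists i, ~ Qr u1 (a i))) as [Hex|Hex].
    - apply HC; auto. intro i. destruct (Hab i) as [[z [w [Ex [Ey Hg]]]]|[Hxy _]].
      + left. split; [exists z|exists w]; auto.
      + right. auto.
    - assert (cw : forall i, exists zw : carrier Z1 * carrier Z2,
                 a i = u1 (fst zw) /\ b i = u2 (snd zw) /\ gg sZ' (fst zw) (snd zw)).
      { intro i. destruct (Hab i) as [[z [w [Ex [Ey Hg]]]]|[Hxy _]].
        - exists (z,w). auto.
        - exfalso. apply Hex. exists i. apply (F0 _ _ Hxy). }
      set (pz := fun i => proj1_sig (constructive_indefinite_description _ (cw i))).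
      assert (pzs : forall i, a i = u1 (fst (pz i)) /\ b i = u2 (snd (pz i)) /\ gg sZ' (fst (pz i)) (snd (pz i))).
      { intro i. exact (proj2_sig (constructive_indefinite_description _ (cw i))). }
      assert (Ea : a = fun i => u1 (fst (pz i))) by (apply functional_extensionality; intro i; apply pzs).
      assert (Eb : b = fun i => u2 (snd (pz i))) by (apply functional_extensionality; intro i; apply pzs).
      rewrite Ea, Eb. apply (HQ (gg sZ') Zp). intro i; apply pzs. }
  assert (Hh1o : forall x, gA1 sL x -> h1' x = gh1 sL x).
  { intros x H. destruct (classic (Qr u1 x)) as [[z Hz]|Hq].
    - subst x. rewrite h1in. assert (Hz : gA1 sZ z) by (apply C3; auto). rewrite E5, C5; auto.
    - destruct (Ft1 x Hq) as [y Hy]. rewrite (h1out x y Hy). apply pif_t; auto. }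
  assert (Hh1n : forall x, A' x -> ~ gA1 sL x -> S n <= h1' x).
  { intros x H1 H2. destruct (classic (Qr u1 x)) as [[z Hz]|Hq].
    - subst x. rewrite h1in. unfold n. rewrite <- C1. apply G3; [exact H1|]. intro H. apply H2, C3, H.
    - destruct (Ft1 x Hq) as [y Hy]. rewrite (h1out x y Hy). rewrite pif_f by auto. unfold pif.
      destruct (excluded_middle_informative _); lia. }
  assert (Hh2o : forall y, gA2 sL y -> h2' y = gh2 sL y).
  { intros y H. destruct (classic (Qr u2 y)) as [[w Hw0]|Hq].
    - subst y. rewrite h2in. assert (Hw1 : gA2 sZ w) by (apply C4; auto). rewrite E6, C6; auto.
    - rewrite h2out by auto. apply pif_t; auto. }
  assert (Hh2n : forall x y, g' x y -> h2' y < S n).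
  { intros x y [[z [w [Ex [Ey Hg]]]]|[Hxy [HA Hh]]].
    - subst. rewrite h2in. rewrite <- Hn'. apply (Zh z w Hg).
    - rewrite h2out by (apply (F0 _ _ Hxy)). unfold pif.
      destruct (excluded_middle_informative _) as [H|H]; [|lia].
      pose proof (C10 x y Hxy HA H). fold n in H0. lia. }
  assert (B := build1 Th L1 L2 sL b' A' g' h1' h2' Hn HsL0 HA' HsA' Hsub Hdom Hf Hi Hp Hh1o Hh1n Hh2o Hh2n).
  eexists. split; [exact B|]. split; [apply B|].
  exists sZ'. split; [exact Hw'|]. split; [exact E80|].
  unfold SumCorr; simpl.
  assert (Hnf : forall w x, g' x (u2 w) -> exists z, x = u1 z /\ gg sZ' z w).
  { intros w x [[z [w' [Ex [Ey Hg]]]]|[Hxy _]].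
    - apply U2 in Ey. subst. eauto.
    - exfalso. apply (proj2 (F0 _ _ Hxy)). exists w; auto. }
  split; [exact Hn'|]. split; [exact E2|].
  split; [intro z; symmetry; apply G1|].
  split; [intro w; rewrite G2; split; [intros [H|[x H]]; [left; apply C4; auto|right; destruct (Hnf w x H) as [z [_ Hz]]; eauto]
         |intros [H|[z H]]; [left; apply C4; auto|right; exists (u1 z); left; eauto]]|].
  split; [intros z _; apply h1in|].
  split; [intros w _; apply h2in|].
  split; [intros z w; split; [intros H; destruct (Hnf w _ H) as [z' [Ez Hz]]; apply U1 in Ez; subst; auto|intro H; left; eauto]|].
  split; [intros x y [[z [w [Ex [Ey Hg]]]]|[Hxy _]]; split; intro H;
          [exists w; auto|exists z; auto|exfalso; apply (proj1 (F0 _ _ Hxy)), H|exfalso; apply (proj2 (F0 _ _ Hxy)), H]|].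
  split; [intros x y [[z [w [Ex [Ey Hg]]]]|[Hxy _]] Hq'; [exfalso; apply Hq'; exists z; auto|exact Hxy]|].
  intros x y Hxy HA1 HA2.
  assert (Hfx : ~ Qr u2 y) by (apply (F0 _ _ Hxy)).
  rewrite h2out by exact Hfx.
  assert (Hpaired : ~ gA2 sL y -> gA1 sL x /\ gh1 sL x < S n).
  { intro H. destruct HA2 as [H'|[x' Hx']]; [contradiction|].
    destruct Hx' as [[z [w [Ex [Ey Hg]]]]|[Hxy' [HA1' Hh]]].
    - exfalso. apply Hfx. exists w; auto.
    - assert (x' = x) by (eapply Fi; eauto). subst x'. auto. }
  rewrite (h1out x y Hxy).
  destruct (classic (gA1 sL x)) as [H1|H1]; destruct (classic (gA2 sL y)) as [H2|H2].
  - rewrite !pif_t by auto. pose proof (C10 x y Hxy H1 H2). fold n in H. lia.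
  - rewrite pif_t by auto. rewrite pif_f by auto. destruct (Hpaired H2). lia.
  - rewrite pif_f by auto. rewrite !pif_t by auto. lia.
  - exfalso. destruct (Hpaired H2). contradiction.
Qed.
End SumS.

Lemma start_pq (Th : Type) {A V : Type} {ar : V -> nat} (M1 M2 : structure V ar) :
  is_state Th M1 M2 (@start A V ar M1 M2) -> preserves_qf M1 M2 (fun _ _ => False).
Proof. intros [_ [_ [_ [_ [_ [H _]]]]]]. exact H. Qed.

Lemma start_state_of_pq (Th : Type) {A V : Type} {ar : V -> nat} (M1 M2 : structure V ar) :
  preserves_qf M1 M2 (fun _ _ => False) -> is_state Th M1 M2 (@start A V ar M1 M2).
Proof.
  intro H. split; [apply small_empty|]. split; [apply small_empty|].
  split; [simpl; tauto|]. split; [simpl; tauto|]. split; [simpl; tauto|].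
  split; [exact H|simpl; tauto].
Qed.

Theorem sum_E0 (Th : Type) (Hn : card_le nat Th) {A : Type} (R : A -> A -> Prop) (wf : well_founded R)
  {V V' : Type} {ar : V -> nat} {ar' : V' -> nat}
  (Z1 Z2 : structure V' ar') (L1 L2 : structure V ar)
  (u1 : carrier Z1 -> carrier L1) (u2 : carrier Z2 -> carrier L2)
  (fr : carrier L1 -> carrier L2 -> Prop) :
  SumHyp Z1 Z2 L1 L2 u1 u2 fr -> E0 Th R Z1 Z2 -> E0 Th R L1 L2.
Proof.
  intros HS [HZs HZw].
  assert (HLs : is_state Th L1 L2 (@start A _ _ L1 L2)).
  { apply start_state_of_pq. intros s a b Hab.
    destruct HS as [_ [_ [_ [_ [_ [_ [_ [HQ _]]]]]]]].
    set (a' := fun i => False_rect (carrier Z1) (Hab i)).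
    set (b' := fun i => False_rect (carrier Z2) (Hab i)).
    assert (Ea : a = fun i => u1 (a' i)) by (apply functional_extensionality; intro i; destruct (Hab i)).
    assert (Eb : b = fun i => u2 (b' i)) by (apply functional_extensionality; intro i; destruct (Hab i)).
    rewrite Ea, Eb. apply (HQ (fun _ _ => False)); auto. apply (start_pq Th Z1 Z2 HZs). }
  split; [exact HLs|].
  apply (win_sym Th R wf L1 L2 (SumInv Th R u1 u2 fr) (SumInv Th R u2 u1 (fun y x => fr x y))).
  - intros sL [Hs [sZ [Hw [HsZ HC]]]]. split; [apply swap_state; auto|].
    exists (swapS sZ). split; [apply swap_wins; auto|]. split; [apply swap_state; auto|].
    exact (SumCorr_sym Z1 Z2 L1 L2 u1 u2 fr sZ sL HS HC).
  - intros sL [Hs [sZ [Hw [HsZ HC]]]]. split; [apply swap_state; auto|].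
    exists (swapS sZ). split; [apply swap_wins; auto|]. split; [apply swap_state; auto|].
    exact (SumCorr_sym Z2 Z1 L2 L1 u2 u1 (fun y x => fr x y) sZ sL (SumHyp_sym _ _ _ _ _ _ _ HS) HC).
  - apply (sum_side1 Th Hn R Z1 Z2 L1 L2 u1 u2 fr HS).
  - apply (sum_side1 Th Hn R Z2 Z1 L2 L1 u2 u1 (fun y x => fr x y) (SumHyp_sym _ _ _ _ _ _ _ HS)).
  - split; [exact HLs|]. exists (@start A _ _ Z1 Z2). split; [exact HZw|]. split; [exact HZs|].
    unfold SumCorr; simpl. repeat split; try tauto.
Qed.


Definition emptyE : structure Empty_set empty_ar :=
  {| carrier := Empty_set; rel := fun (e : Empty_set) _ => match e return Prop with end |}.

Lemma emptyE_E0 (Th : Type) (Hn : card_le nat Th) {A : Type} (R : A -> A -> Prop) (wf : well_founded R) :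
  E0 Th R emptyE emptyE.
Proof.
  assert (Hs : is_state Th emptyE emptyE (@start A _ _ emptyE emptyE)).
  { apply start_state_of_pq. apply pq_empty. }
  split; [exact Hs|].
  apply (win_gen Th R wf emptyE emptyE (is_state Th emptyE emptyE)); [| |exact Hs].
  - intros s b' A' HI [_ [HA' HsA']].
    assert (B := build1 Th emptyE emptyE s b' A' (fun _ _ => False) (fun _ => 0) (fun _ => 0) Hn HI HA' HsA').
    eexists. split; [apply B|apply B]; intros; simpl in *;
      try match goal with x : Empty_set |- _ => destruct x end; try apply pq_empty.
  - intros s b' A' HI [_ [HA' HsA']].
    assert (B := build2 Th emptyE emptyE s b' A' (fun _ _ => False) (fun _ => 0) (fun _ => 0) Hn HI HA' HsA').
    eexists. split; [apply B|apply B]; intros; simpl in *;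
      try match goal with x : Empty_set |- _ => destruct x end; try apply pq_empty.
Qed.

Lemma iso_E0 (Th : Type) (Hn : card_le nat Th) {A : Type} (R : A -> A -> Prop) (wf : well_founded R)
  {V : Type} {ar : V -> nat} (K1 K2 : structure V ar) :
  isomorphic K1 K2 -> E0 Th R K1 K2.
Proof.
  intros [f [g [H1 [H2 H3]]]].
  apply (sum_E0 Th Hn R wf emptyE emptyE K1 K2 (fun e => match e with end) (fun e => match e with end)
           (fun x y => y = f x));
    [|apply emptyE_E0; auto].
  assert (NQ1 : forall x, ~ Qr (fun e : Empty_set => match e return carrier K1 with end) x) by (intros x [[] _]).
  assert (NQ2 : forall x, ~ Qr (fun e : Empty_set => match e return carrier K2 with end) x) by (intros x [[] _]).
  split; [intros [] |]. split; [intros [] |].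
  split; [intros x y _; split; auto|].
  split; [intros x y y' E E'; congruence|].
  split; [intros x x' y E E'; rewrite <- (H1 x), <- (H1 x'); congruence|].
  split; [intros x _; exists (f x); reflexivity|].
  split; [intros y _; exists (g y); symmetry; apply H2|].
  split.
  - intros gz _ s a' b' _.
    assert (E : (fun i => f (match a' i return carrier K1 with end)) = (fun i => match b' i return carrier K2 with end))
      by (apply functional_extensionality; intro i; destruct (a' i)).
    rewrite H3, E. tauto.
  - intros s a b Hab _. assert (E : b = fun i => f (a i)).
    { apply functional_extensionality. intro i. destruct (Hab i) as [[[[] _] _]|E]; auto. }
    rewrite E. apply H3.
Qed.


Definition relS {V V' : Type} {ar : V -> nat} (K : structure V ar) (pP : V) (kap : V' -> V)
  : structure V' (fun v' => ar (kap v')) :=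
  {| carrier := {x : carrier K | rel K pP (fun _ => x)};
     rel := fun v' t => rel K (kap v') (fun i => proj1_sig (t i)) |}.

Definition resS {A V V' : Type} {ar : V -> nat} {K1 K2 : structure V ar} (pP : V) (kap : V' -> V)
  (s : @gstate A _ _ K1 K2) : gstate (relS K1 pP kap) (relS K2 pP kap) :=
  Build_gstate (relS K1 pP kap) (relS K2 pP kap)
    (fun x => gA1 s (proj1_sig x)) (fun y => gA2 s (proj1_sig y))
    (fun x => gh1 s (proj1_sig x)) (fun y => gh2 s (proj1_sig y))
    (fun x y => gg s (proj1_sig x) (proj1_sig y)) (gb s) (gn s).

Section RelS.
Context (Th : Type) (Hn : card_le nat Th) {A : Type} (R : A -> A -> Prop) (wf : well_founded R)
  {V V' : Type} {ar : V -> nat} (pP : V) (kap : V' -> V).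

Definition PP {K : structure V ar} (x : carrier K) := rel K pP (fun _ => x).

Definition InR {K1 K2 : structure V ar} (s' : gstate (relS K1 pP kap) (relS K2 pP kap)) : Prop :=
  exists s : @gstate A _ _ K1 K2, iso_wins Th R K1 K2 s /\ is_state Th K1 K2 s /\
    (forall x, gA1 s x -> PP x) /\ (forall y, gA2 s y -> PP y) /\ s' = resS pP kap s.

Lemma res_state (K1 K2 : structure V ar) (s : @gstate A _ _ K1 K2) :
  is_state Th K1 K2 s -> is_state Th (relS K1 pP kap) (relS K2 pP kap) (resS pP kap s).
Proof.
  intros [H1 [H2 [H3 [H4 [H5 [H6 H7]]]]]].
  split; [|split; [|split; [|split; [|split; [|split]]]]]; simpl.
  - destruct H1 as [k Hk]. exists (fun p => k (exist (fun x => gA1 s x) (proj1_sig (proj1_sig p)) (proj2_sig p))).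
    intros a b E. apply Hk in E. injection E; intro E'. apply sig_eq_pi, sig_eq_pi, E'.
  - destruct H2 as [k Hk]. exists (fun p => k (exist (fun x => gA2 s x) (proj1_sig (proj1_sig p)) (proj2_sig p))).
    intros a b E. apply Hk in E. injection E; intro E'. apply sig_eq_pi, sig_eq_pi, E'.
  - intros x y y' Ha Hb. apply sig_eq_pi. eapply H3; eauto.
  - intros x x' y Ha Hb. apply sig_eq_pi. eapply H4; eauto.
  - intros x y H. apply H5, H.
  - intros v a b H. simpl. apply H6. exact H.
  - intros x y H. apply H7, H.
Qed.

Lemma rel_side1 (K1 K2 : structure V ar) : forall t b' A',
  @InR K1 K2 t -> ais_legal1 Th R _ _ t b' A' ->
  exists t', iso_resp1 Th _ _ t b' A' t' /\ @InR K1 K2 t'.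
Proof.
  intros t b' A' [s [Hw [Hs [P1 [P2 Et]]]]] [Hb [HA' HsA']]. subst t.
  set (A'' := fun x => exists H : PP x, A' (exist _ x H)).
  assert (HL : ais_legal1 Th R K1 K2 s b' A'').
  { split; [exact Hb|]. split.
    - intros x H. exists (P1 x H). apply (HA' (exist _ x (P1 x H))). exact H.
    - destruct HsA' as [k Hk].
      exists (fun p : {x | A'' x} => k (exist (fun x' => A' x') (exist (fun x => PP x) (proj1_sig p) (proj1_sig (constructive_indefinite_description _ (proj2_sig p))))
                         (proj2_sig (constructive_indefinite_description _ (proj2_sig p))))).
      intros [a Ha] [b Hb'] E. apply Hk in E. simpl in E. injection E; intro E'.
      apply sig_eq_pi. simpl. exact E'. }
  destruct (wins_inv _ _ _ Hw) as [W1 _].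
  destruct (W1 b' A'' HL) as [s' [[[E1 [E2 [E3 [E4 [E5 [E6 [E7 E8]]]]]]] [G1 [G2 [G3 G4]]]] Hw']].
  pose proof E8 as E80. destruct E8 as [ZA1 [ZA2 [Zf [Zi [Zg [Zp Zh]]]]]].
  assert (P1' : forall x, gA1 s' x -> PP x).
  { intros x H. apply G1 in H. destruct H as [H _]. exact H. }
  assert (P2' : forall y, gA2 s' y -> PP y).
  { intros y H. apply G2 in H. destruct H as [H|[x Hx]]; [apply P2, H|].
    assert (Hx1 : PP x) by (apply P1', (Zg x y Hx)).
    unfold PP in *. apply (Zp pP (fun _ => x) (fun _ => y)); auto. }
  exists (resS pP kap s'). split.
  - split; [|split; [|split; [|split]]]; simpl.
    + split; [exact E1|]. split; [exact E2|]. split; [intros x H; apply E3, H|].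
      split; [intros y H; apply E4, H|]. split; [intros x H; apply E5, H|].
      split; [intros y H; apply E6, H|]. split; [intros x y H; apply E7, H|].
      apply res_state; auto.
    + intros [x Hx]. simpl. rewrite G1. unfold A''. split.
      * intros [H HA]. replace Hx with H by apply proof_irrelevance. exact HA.
      * intro HA. exists Hx. exact HA.
    + intros [y Hy]. simpl. rewrite G2. split.
      * intros [H|[x Hx']]; [left; exact H|]. right.
        exists (exist _ x (P1' x (proj1 (Zg x y Hx')))). exact Hx'.
      * intros [H|[[x Hx] Hx']]; [left; exact H|right; exists x; exact Hx'].
    + intros [x Hx] HA HnA. simpl in *. apply G3; auto. exists Hx. exact HA.
    + intros [x Hx]. simpl. rewrite <- G4. split.
      * intros [[y Hy] H]. exists y. exact H.
      * intros [y H]. exists (exist _ y (P2' y (proj2 (Zg x y H)))). exact H.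
  - exists s'. split; [exact Hw'|]. split; [exact E80|]. split; [exact P1'|]. split; [exact P2'|].
    reflexivity.
Qed.
End RelS.

Theorem rel_E0 (Th : Type) (Hn : card_le nat Th) {A : Type} (R : A -> A -> Prop) (wf : well_founded R)
  {V V' : Type} {ar : V -> nat} (pP : V) (kap : V' -> V) (K1 K2 : structure V ar) :
  E0 Th R K1 K2 -> E0 Th R (relS K1 pP kap) (relS K2 pP kap).
Proof.
  intros [Hs Hw].
  assert (Hs' : is_state Th _ _ (resS pP kap (@start A _ _ K1 K2))) by (apply res_state; auto).
  split; [exact Hs'|].
  apply (win_sym Th R wf _ _ (@InR Th A R V V' ar pP kap K1 K2) (@InR Th A R V V' ar pP kap K2 K1)).
  - intros t [s [Hw0 [Hs0 [P1 [P2 E]]]]]. subst t. exists (swapS s).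
    split; [apply swap_wins; auto|]. split; [apply swap_state; auto|].
    split; [exact P2|]. split; [exact P1|]. reflexivity.
  - intros t [s [Hw0 [Hs0 [P1 [P2 E]]]]]. subst t. exists (swapS s).
    split; [apply swap_wins; auto|]. split; [apply swap_state; auto|].
    split; [exact P2|]. split; [exact P1|]. reflexivity.
  - apply rel_side1.
  - apply rel_side1.
  - exists (@start A _ _ K1 K2). split; [exact Hw|]. split; [exact Hs|].
    split; [simpl; tauto|]. split; [simpl; tauto|]. reflexivity.
Qed.


Lemma E1_map (Th : Type) {A : Type} (R : A -> A -> Prop) {V V' : Type} {ar : V -> nat} {ar' : V' -> nat}
  (F : structure V ar -> structure V' ar') :
  (forall a b, E0 Th R a b -> E0 Th R (F a) (F b)) ->
  forall x y, E1 Th R x y -> E1 Th R (F x) (F y).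
Proof.
  intros HF x y H. induction H.
  - apply rst_step. apply HF; auto.
  - apply rst_refl.
  - apply rst_sym; auto.
  - eapply rst_trans; eauto.
Qed.

Lemma fin1_eq (i : Fin.t 1) : i = Fin.F1.
Proof.
  apply (Fin.caseS' i (fun i => i = Fin.F1)); [reflexivity|].
  intro p. apply (Fin.case0 (fun p => Fin.FS p = Fin.F1) p).
Qed.

Lemma fin1_const {T : Type} (t : Fin.t 1 -> T) (i : Fin.t 1) : t = fun _ => t i.
Proof. apply functional_extensionality. intro j. rewrite (fin1_eq i), (fin1_eq j). reflexivity. Qed.

Definition liftT {V1 : Type} {ar1 : V1 -> nat} (tau : option V1 -> Prop) (X : Type)
  (Z : structure {q : V1 | tau (Some q)} (fun s => ar1 (proj1_sig s)))
  : structure {o : option V1 | tau o} (fun s => ext_ar ar1 (proj1_sig s)) :=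
  {| carrier := (carrier Z + X)%type;
     rel := fun w => match w as w0 return ((Fin.t (ext_ar ar1 (proj1_sig w0)) -> (carrier Z + X)%type) -> Prop) with
      | exist _ o H => match o as o0 return (tau o0 -> (Fin.t (ext_ar ar1 o0) -> (carrier Z + X)%type) -> Prop) with
          | Some q => fun H t => exists t', t = (fun i => inl (t' i)) /\ rel Z (exist _ q H) t'
          | None => fun _ t => exists t', t = (fun i => inl (t' i))
          end H
      end |}.

Lemma inl_tuple {n : nat} {T X : Type} (a b : Fin.t n -> T) :
  (fun i => @inl T X (a i)) = (fun i => inl (b i)) -> a = b.
Proof.
  intro E. apply functional_extensionality. intro i.
  assert (E' := f_equal (fun F => F i) E). simpl in E'. injection E'; auto.
Qed.

Lemma lift_E0 (Th : Type) (Hn : card_le nat Th) {A : Type} (R : A -> A -> Prop) (wf : well_founded R)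
  {V1 : Type} {ar1 : V1 -> nat} (tau : option V1 -> Prop) (X : Type)
  (Z1 Z2 : structure {q : V1 | tau (Some q)} (fun s => ar1 (proj1_sig s))) :
  E0 Th R Z1 Z2 -> E0 Th R (liftT tau X Z1) (liftT tau X Z2).
Proof.
  apply (sum_E0 Th Hn R wf Z1 Z2 (liftT tau X Z1) (liftT tau X Z2) inl inl
           (fun p q => exists x, p = inr x /\ q = inr x)).
  assert (NQ : forall (Z : Type) (x : X), ~ Qr (@inl Z X) (inr x)) by (intros Z x [z E]; discriminate).
  split; [intros a b E; injection E; auto|]. split; [intros a b E; injection E; auto|].
  split; [intros p q [x [E1 E2]]; subst; split; apply NQ|].
  split; [intros p q q' [x [E1 E2]] [x' [E1' E2']]; subst; congruence|].
  split; [intros p p' q [x [E1 E2]] [x' [E1' E2']]; subst; congruence|].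
  split; [intros [z|x] H; [exfalso; apply H; exists z; auto|exists (inr x); exists x; auto]|].
  split; [intros [z|x] H; [exfalso; apply H; exists z; auto|exists (inr x); exists x; auto]|].
  split.
  - intros gz Hgz [[q|] H] a' b' Hab; simpl.
    + split.
      * intros [t' [E Hr]]. apply inl_tuple in E. subst t'. exists b'. split; auto.
        apply (Hgz (exist _ q H) a' b' Hab). exact Hr.
      * intros [t' [E Hr]]. apply inl_tuple in E. subst t'. exists a'. split; auto.
        apply (Hgz (exist _ q H) a' b' Hab). exact Hr.
    + split; intros _; eexists; reflexivity.
  - intros s a b Hab [i Hi].
    assert (Ha : forall t', a <> (fun i => inl (t' i))).
    { intros t' E. apply Hi. rewrite E. exists (t' i); reflexivity. }
    assert (Hb : forall t', b <> (fun i => inl (t' i))).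
    { intros t' E. destruct (Hab i) as [[H1 H2]|[x [E1 E2]]]; [contradiction|].
      assert (E' := f_equal (fun F => F i) E). simpl in E'. rewrite E2 in E'. discriminate. }
    destruct s as [[q|] H]; simpl; split.
    + intros [t' [E _]]. exfalso; eapply Ha; eauto.
    + intros [t' [E _]]. exfalso; eapply Hb; eauto.
    + intros [t' E]. exfalso; eapply Ha; eauto.
    + intros [t' E]. exfalso; eapply Hb; eauto.
Qed.

Lemma reduct_iso {V : Type} {ar : V -> nat} (S : V -> Prop) (N1 N2 : structure V ar) :
  isomorphic N1 N2 -> isomorphic (reduct S N1) (reduct S N2).
Proof.
  intros [f [g [H1 [H2 H3]]]]. exists f, g. split; auto. split; auto.
  intros s t. simpl. apply H3.
Qed.

Lemma iso_sym {V : Type} {ar : V -> nat} (N1 N2 : structure V ar) :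
  isomorphic N1 N2 -> isomorphic N2 N1.
Proof.
  intros [f [g [H1 [H2 H3]]]]. exists g, f. split; auto. split; auto.
  intros s t. rewrite H3. replace (fun i => f (g (t i))) with t; [tauto|].
  apply functional_extensionality; intro i; rewrite H2; auto.
Qed.

Lemma card_le_empty (T : Type) : card_le Empty_set T.
Proof. exists (Empty_set_rect _). intros []. Qed.

Section Part1.
Context (Th : Type) (Hn : card_le nat Th) (V1 : Type) (ar1 : V1 -> nat)
  (psi2 : sentence Th (option V1) (ext_ar ar1))
  (Hyp : forall M, sat M psi2 ->
       (exists x, predP M x) /\
       (forall q (t : Fin.t (ar1 q) -> carrier M), rel M (Some q) t -> forall i, predP M (t i))).

Let tau := s_sub psi2.
Let R2 := oR (s_ord psi2).
Let wf2 : well_founded R2 := wo_wf _ _ (o_wo (s_ord psi2)).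

Lemma part1_noP : ~ tau None ->
  exists psi1 : sentence Th V1 ar1,
      forall N : structure V1 ar1,
        sat N psi1 <-> exists M, sat M psi2 /\ isomorphic N (relativize M).
Proof.
  intro nN.
  exists {| s_sub := fun _ => False; s_sub_small := small_empty Th; s_ord := s_ord psi2;
            s_idx := Empty_set; s_idx_small := card_le_empty _;
            s_models := Empty_set_rect _ |}.
  intro N. split.
  - intros [[] _].
  - intros [M [HM _]]. exfalso.
    set (M' := {| carrier := carrier M;
                  rel := fun o => match o as o0 return ((Fin.t (ext_ar ar1 o0) -> carrier M) -> Prop) with
                         | Some q => rel M (Some q) | None => fun _ => False end |} : structure (option V1) (ext_ar ar1)).
    assert (E : reduct tau M' = reduct tau M).
    { unfold reduct. f_equal. apply functional_extensionality_dep. intros [[q|] H]; [reflexivity|contradiction]. }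
    assert (HM' : sat M' psi2).
    { destruct HM as [i Hi]. exists i. fold tau. rewrite E. exact Hi. }
    destruct (Hyp M' HM') as [[x Hx] _]. exact Hx.
Qed.

Lemma iso_lift (M0 : structure (option V1) (ext_ar ar1))
  (Hin : forall q (t : Fin.t (ar1 q) -> carrier M0), rel M0 (Some q) t -> forall i, predP M0 (t i)) :
  isomorphic (reduct tau M0) (liftT tau {x : carrier M0 | ~ predP M0 x} (reduct (fun q => tau (Some q)) (relativize M0))).
Proof.
  set (f := fun x : carrier M0 => match excluded_middle_informative (predP M0 x) with
            | left H => @inl {x | predP M0 x} {x | ~ predP M0 x} (exist _ x H)
            | right H => inr (exist _ x H) end).
  set (g := fun p : ({x | predP M0 x} + {x | ~ predP M0 x})%type =>
            match p with inl y => proj1_sig y | inr y => proj1_sig y end).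
  assert (fP : forall x (H : predP M0 x), f x = inl (exist _ x H)).
  { intros x H. unfold f. destruct (excluded_middle_informative (predP M0 x)) as [H'|H'];
    [f_equal; apply sig_eq_pi; reflexivity|contradiction]. }
  assert (gf : forall x, g (f x) = x).
  { intro x. unfold f. destruct (excluded_middle_informative (predP M0 x)); reflexivity. }
  assert (h3 : forall n (t : Fin.t n -> carrier M0) t', (fun i => f (t i)) = (fun i => inl (t' i)) ->
               t = (fun i => proj1_sig (t' i))).
  { intros n t t' E. apply functional_extensionality. intro i.
    assert (E' := f_equal (fun F => g (F i)) E). simpl in E'. rewrite gf in E'. exact E'. }
  assert (h2 : forall n (t : Fin.t n -> carrier M0) (H : forall i, predP M0 (t i)),
               (fun i => f (t i)) = (fun i => inl (exist _ (t i) (H i)))).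
  { intros n t H. apply functional_extensionality. intro i. apply fP. }
  exists f, g. split; [exact gf|]. split.
  - intros [[x Hx]|[x Hx]]; simpl.
    + apply fP.
    + unfold f. destruct (excluded_middle_informative (predP M0 x)); [contradiction|].
      f_equal. apply sig_eq_pi; reflexivity.
  - intros [[q|] H] t; simpl.
    + split.
      * intro Hr. pose proof (Hin q t Hr) as HP. exists (fun i => exist _ (t i) (HP i)).
        split; [apply h2|]. exact Hr.
      * intros [t' [E Hr]]. rewrite (h3 _ t t' E). exact Hr.
    + split.
      * intro Hr. assert (HP : forall i, predP M0 (t i)).
        { intro i. exact (eq_rect _ (fun u => rel M0 None u) Hr _ (fin1_const t i)). }
        exists (fun i => exist _ (t i) (HP i)). exact (h2 _ t HP).
      * intros [t' E]. rewrite (h3 _ t t' E).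
        exact (eq_rect _ (fun u => rel M0 None u) (proj2_sig (t' Fin.F1)) _
                 (eq_sym (fin1_const (fun i => proj1_sig (t' i)) Fin.F1))).
Qed.

Lemma part1_P (pN : tau None) :
  exists psi1 : sentence Th V1 ar1,
      forall N : structure V1 ar1,
        sat N psi1 <-> exists M, sat M psi2 /\ isomorphic N (relativize M).
Proof.
  set (tau' := fun q => tau (Some q)).
  set (J := {i : s_idx psi2 | exists M : structure (option V1) (ext_ar ar1),
                 E1 Th R2 (reduct tau M) (s_models psi2 i)}).
  set (Mj := fun j : J => proj1_sig (constructive_indefinite_description _ (proj2_sig j))).
  assert (HMj : forall j, E1 Th R2 (reduct tau (Mj j)) (s_models psi2 (proj1_sig j))).
  { intro j. exact (proj2_sig (constructive_indefinite_description _ (proj2_sig j))). }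
  assert (Hsub : small Th tau').
  { destruct (s_sub_small _ _ _ psi2) as [k Hk].
    exists (fun p : {q | tau' q} => k (exist (fun o => s_sub psi2 o) (Some (proj1_sig p)) (proj2_sig p))).
    intros [a Ha] [b Hb] E. apply Hk in E. injection E; intro E'. apply sig_eq_pi. simpl. exact E'. }
  assert (Hidx : card_le J (beth_succ Th (wo_wf _ _ (o_wo (s_ord psi2))))).
  { destruct (s_idx_small _ _ _ psi2) as [k Hk]. exists (fun j : J => k (proj1_sig j)).
    intros a b E. apply Hk in E. apply sig_eq_pi, E. }
  exists {| s_sub := tau'; s_sub_small := Hsub; s_ord := s_ord psi2; s_idx := J; s_idx_small := Hidx;
            s_models := fun j => reduct tau' (relativize (Mj j)) |}.
  set (kap := fun w : {q | tau' q} => exist tau (Some (proj1_sig w)) (proj2_sig w)).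
  set (pPw := exist tau None pN).
  intro N. split.
  - intros [j HE]. simpl in HE.
    set (M0 := Mj j) in *.
    assert (satM0 : sat M0 psi2) by (exists (proj1_sig j); apply HMj).
    destruct (Hyp M0 satM0) as [_ Hin].
    set (X := {x : carrier M0 | ~ predP M0 x}).
    set (Mf := {| carrier := (carrier N + X)%type;
                  rel := fun o => match o as o0 return ((Fin.t (ext_ar ar1 o0) -> (carrier N + X)%type) -> Prop) with
                         | Some q => fun t => exists t', t = (fun i => inl (t' i)) /\ rel N q t'
                         | None => fun t => exists t', t = (fun i => inl (t' i)) end |}
               : structure (option V1) (ext_ar ar1)).
    exists Mf. split.
    + exists (proj1_sig j).
      assert (EqL : reduct tau Mf = liftT tau X (reduct tau' N)).
      { unfold reduct, liftT. simpl. f_equal. apply functional_extensionality_dep. intros [[q|] H]; reflexivity. }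
      change (E1 Th R2 (reduct tau Mf) (s_models psi2 (proj1_sig j))). rewrite EqL.
      apply rst_trans with (liftT tau X (reduct tau' (relativize M0))).
      * apply (E1_map Th R2 (liftT tau X)); [intros a b Hab; apply lift_E0; auto|exact HE].
      * apply rst_trans with (reduct tau M0); [|apply HMj].
        apply rst_step. apply iso_E0; auto. apply iso_sym. apply iso_lift; auto.
    + assert (noinr : forall x, predP Mf (inr x) -> False).
      { intros x [t' E]. assert (E' := f_equal (fun F => F Fin.F1) E). simpl in E'. discriminate. }
      set (fN := fun n : carrier N => exist (fun z => predP Mf z) (inl n) (ex_intro _ (fun _ => n) eq_refl)).
      set (gN := fun z : {z | predP Mf z} => match z with exist _ p H =>
                   match p as p0 return (predP Mf p0 -> carrier N) with
                   | inl n => fun _ => n | inr x => fun H => False_rect _ (noinr x H) end H end).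
      exists fN, gN. split; [intro x; reflexivity|]. split.
      * intros [[n|x] H]; simpl; [apply sig_eq_pi; reflexivity|destruct (noinr x H)].
      * intros q t. simpl. split.
        -- intro Hr. exists t. split; auto.
        -- intros [t' [E Hr]]. apply inl_tuple in E. subst. exact Hr.
  - intros [M [[i HM] Hiso]].
    exists (exist _ i (ex_intro _ M HM) : J). simpl.
    apply rst_trans with (reduct tau' (relativize M)).
    + apply rst_step, iso_E0; auto. apply reduct_iso; auto.
    + change (E1 Th R2 (relS (reduct tau M) pPw kap) (relS (reduct tau (Mj (exist _ i (ex_intro _ M HM)))) pPw kap)).
      apply (E1_map Th R2 (fun K => relS K pPw kap)); [intros a b Hab; exact (rel_E0 Th Hn R2 wf2 pPw kap a b Hab)|].
      apply rst_trans with (s_models psi2 i); [exact HM|apply rst_sym; apply (HMj (exist _ i (ex_intro _ M HM)))].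
Qed.
End Part1.

Theorem part1 (Th : Type) (Hn : card_le nat Th) : dullness_elimination Th.
Proof.
  intros V1 ar1 psi2 Hyp.
  destruct (classic (s_sub psi2 None)) as [pN|nN].
  - apply (part1_P Th Hn V1 ar1 psi2 Hyp pN).
  - apply (part1_noP Th V1 ar1 psi2 Hyp nN).
Qed.


Theorem claim3p9 (Theta : Type) (Hinf : infinite_card Theta) :
  dullness_elimination Theta /\
  (forall M1 M2 : structure Empty_set empty_ar,
     ~ card_le (carrier M1) Theta -> ~ card_le (carrier M2) Theta ->
     forall alpha : ordinal_lt_succ Theta, E1 Theta (oR alpha) M1 M2) /\
  (cof_omega Theta ->
   forall M1 M2 : structure Empty_set empty_ar,
     card_le Theta (carrier M1) -> card_le Theta (carrier M2) ->
     forall alpha : ordinal_lt_succ Theta, E1 Theta (oR alpha) M1 M2).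
Proof.
  split; [apply part1; exact Hinf|]. split.
  - intros M1 M2 H1 H2 alpha. apply part2; auto. exact (wo_wf _ _ (o_wo alpha)).
  - intros _ M1 M2 H1 H2 alpha. apply part23; auto. exact (wo_wf _ _ (o_wo alpha)).
Qed.
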